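(* Let $L$ be a left adequate semigroup and $R$ a right adequate semigroup with a common quasi-ideal adequate transversal $S^0$. Let $L|\times|R=\{(x,a)\in L\times R:\overline{x}=\overline{a}\}$ with multiplication $(x,a)(y,b)=(x\overline{y},\,\overline{a}b)=(x\overline{b},\,\overline{x}b)$. Then $L|\times|R$ is a quasi-adequate semigroup with an admissible, quasi-ideal adequate transversal isomorphic to $S^0$. Moreover every quasi-adequate semigroup with an admissible, quasi-ideal adequate transversal can be constructed (up to isomorphism) in this way.
   Context: For a semigroup $S$, $S^1$ is $S$ with an identity adjoined, $\mathcal{L},\mathcal{R}$ Green's relations. $\mathcal{R}^\ast=\{(a,b):\forall x,y\in S^1,\ xa=ya\iff xb=yb\}$, $\mathcal{L}^\ast=\{(a,b):\forall x,y\in S^1,\ ax=ay\iff bx=by\}$. $S$ is abundant if each $\mathcal{R}^\ast$- and $\mathcal{L}^\ast$-class contains an idempotent; adequate if also idempotents commute (then $a^+$, $a^\ast$ denote the unique idempotents $\mathcal{R}^\ast$-, resp. $\mathcal{L}^\ast$-related to $a$); left adequate (right adequate) if abundant and every $\mathcal{R}^\ast$-class (every $\mathcal{L}^\ast$-class) contains a unique idempotent. An abundant subsemigroup $U$ of abundant $S$ is a $\ast$-subsemigroup if $\mathcal{L}^\ast(U)=\mathcal{L}^\ast(S)\cap(U\times U)$, $\mathcal{R}^\ast(U)=\mathcal{R}^\ast(S)\cap(U\times U)$. An adequate $\ast$-subsemigroup $S^0$ of abundant $S$ is an adequate transversal if each $x\in S$ has a unique $\overline{x}\in S^0$ and idempotents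 $e,f$ with $x=e\overline{x}f$, $e\,\mathcal{L}\,\overline{x}^+$, $f\,\mathcal{R}\,\overline{x}^\ast$. It is a quasi-ideal if $S^0SS^0\subseteq S^0$, and (when $S$ is quasi-adequate, i.e. abundant with idempotents forming a subsemigroup) admissible if $\overline{xy}=\overline{x}\,\overline{y}$ for all $x,y$. ''Common quasi-ideal adequate transversal'' means $S^0$ is a subsemigroup of both $L$ and $R$ and is a quasi-ideal adequate transversal of each; $\overline{x}$ for $x\in L$ is computed in $L$, for $a\in R$ in $R$. *)

(* Defs.v *)
From Stdlib Require Import ClassicalDescription.

Set Implicit Arguments.
Unset Strict Implicit.

Section Semigroup.
Variables (T : Type) (mul : T -> T -> T).

Definition associative := forall a b c, mul a (mul b c) = mul (mul a b) c.

Definition idempotent (e : T) := mul e e = e.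

(* Left / right multiplication by an element of S^1 (None = adjoined identity). *)
Definition lmul1 (x : option T) (a : T) : T :=
  match x with Some x => mul x a | None => a end.
Definition rmul1 (a : T) (x : option T) : T :=
  match x with Some x => mul a x | None => a end.

Definition in1 (P : T -> Prop) (x : option T) : Prop :=
  match x with Some x => P x | None => True end.

Definition full : T -> Prop := fun _ => True.

Definition GreenL (a b : T) :=
  exists x y : option T, a = lmul1 x b /\ b = lmul1 y a.
Definition GreenR (a b : T) :=
  exists x y : option T, a = rmul1 b x /\ b = rmul1 a y.

Definition RstarIn (P : T -> Prop) (a b : T) :=
  forall x y : option T, in1 P x -> in1 P y ->
    (lmul1 x a = lmul1 y a <-> lmul1 x b = lmul1 y b).
Definition LstarIn (P : T -> Prop) (a b : T) :=
  forall x y : option T, in1 P x -> in1 P y ->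
    (rmul1 a x = rmul1 a y <-> rmul1 b x = rmul1 b y).

Definition Rstar := RstarIn full.
Definition Lstar := LstarIn full.

Definition subsemigroup (P : T -> Prop) :=
  forall a b, P a -> P b -> P (mul a b).

Definition abundant_in (P : T -> Prop) :=
  forall a, P a ->
    (exists e, P e /\ idempotent e /\ RstarIn P a e) /\
    (exists f, P f /\ idempotent f /\ LstarIn P a f).

Definition idempotents_commute_in (P : T -> Prop) :=
  forall e f, P e -> P f -> idempotent e -> idempotent f -> mul e f = mul f e.

Definition adequate_in (P : T -> Prop) :=
  abundant_in P /\ idempotents_commute_in P.

Definition abundant := abundant_in full.
Definition adequate := adequate_in full.

Definition left_adequate :=
  abundant /\
  forall a e f, idempotent e -> idempotent f -> Rstar a e -> Rstar a f -> e = f.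

Definition right_adequate :=
  abundant /\
  forall a e f, idempotent e -> idempotent f -> Lstar a e -> Lstar a f -> e = f.

Definition quasi_adequate :=
  abundant /\ forall e f, idempotent e -> idempotent f -> idempotent (mul e f).

Definition star_subsemigroup (P : T -> Prop) :=
  subsemigroup P /\ abundant_in P /\
  (forall a b, P a -> P b -> (LstarIn P a b <-> Lstar a b)) /\
  (forall a b, P a -> P b -> (RstarIn P a b <-> Rstar a b)).

Definition is_plus (P : T -> Prop) (a p : T) :=
  P p /\ idempotent p /\ RstarIn P a p.
Definition is_star (P : T -> Prop) (a q : T) :=
  P q /\ idempotent q /\ LstarIn P a q.

Definition is_bar (P : T -> Prop) (x s : T) :=
  P s /\ exists e f, idempotent e /\ idempotent f /\ x = mul (mul e s) f /\
    (exists p, is_plus P s p /\ GreenL e p) /\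
    (exists q, is_star P s q /\ GreenR f q).

Definition adequate_transversal (P : T -> Prop) :=
  star_subsemigroup P /\ adequate_in P /\
  forall x, exists! s, is_bar P x s.

Definition quasi_ideal (P : T -> Prop) :=
  forall a x b, P a -> P b -> P (mul (mul a x) b).

Definition admissible (P : T -> Prop) :=
  forall x y s t, is_bar P x s -> is_bar P y t -> is_bar P (mul x y) (mul s t).

End Semigroup.

Definition image {A B : Type} (f : A -> B) : B -> Prop :=
  fun b => exists a, b = f a.

Definition injective {A B : Type} (f : A -> B) := forall a a', f a = f a' -> a = a'.
Definition surjective {A B : Type} (f : A -> B) := forall b, exists a, b = f a.
Definition morphism {A B : Type} (mA : A -> A -> A) (mB : B -> B -> B) (f : A -> B) :=
  forall a a', f (mA a a') = mB (f a) (f a').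

(* L left adequate, R right adequate, S0 a common quasi-ideal adequate
   transversal (embedded in L and R by injective morphisms iL, iR), and
   barL, barR the bar maps computed in L and in R respectively. *)
Definition common_setup (L R S0 : Type) (mulL : L -> L -> L) (mulR : R -> R -> R)
  (mul0 : S0 -> S0 -> S0) (iL : S0 -> L) (iR : S0 -> R)
  (barL : L -> S0) (barR : R -> S0) : Prop :=
  associative mulL /\ associative mulR /\ associative mul0 /\
  left_adequate mulL /\ right_adequate mulR /\
  injective iL /\ morphism mul0 mulL iL /\
  injective iR /\ morphism mul0 mulR iR /\
  adequate_transversal mulL (image iL) /\ quasi_ideal mulL (image iL) /\
  adequate_transversal mulR (image iR) /\ quasi_ideal mulR (image iR) /\
  (forall x, is_bar mulL (image iL) x (iL (barL x))) /\
  (forall a, is_bar mulR (image iR) a (iR (barR a))).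

Section Spined.
Variables (L R S0 : Type) (mulL : L -> L -> L) (mulR : R -> R -> R)
  (iL : S0 -> L) (iR : S0 -> R) (barL : L -> S0) (barR : R -> S0).

Definition LR := { p : L * R | barL (fst p) = barR (snd p) }.

Definition LR_first (p q : LR) : L := mulL (fst (proj1_sig p)) (iL (barL (fst (proj1_sig q)))).
Definition LR_second (p q : LR) : R := mulR (iR (barR (snd (proj1_sig p)))) (snd (proj1_sig q)).

Definition LR_closed : Prop :=
  forall p q : LR, barL (LR_first p q) = barR (LR_second p q).

(* the multiplication; the fallback branch is never used once LR_closed holds *)
Definition mulLR (p q : LR) : LR :=
  match excluded_middle_informative (barL (LR_first p q) = barR (LR_second p q)) with
  | left h => exist _ (LR_first p q, LR_second p q) h
  | right _ => p
  end.

End Spined.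
Arguments mulLR [L R S0] mulL mulR iL iR barL barR p q.

(* Main.v *)
Require Import Defs.
From Stdlib Require Import ClassicalDescription ProofIrrelevance Classical IndefiniteDescription.
Set Default Proof Using "All".
Set Implicit Arguments.
Unset Strict Implicit.

Lemma in1_full T x : in1 (@full T) x.
Proof. destruct x; simpl; exact I. Qed.

Section Gen.
Variables (T : Type) (mul : T -> T -> T).
Hypothesis assoc : associative mul.

Lemma lmul1_mul u a b : lmul1 mul u (mul a b) = mul (lmul1 mul u a) b.
Proof. destruct u; simpl; auto. Qed.
Lemma rmul1_mul a b u : rmul1 mul (mul a b) u = mul a (rmul1 mul b u).
Proof. destruct u; simpl; auto; symmetry; apply assoc. Qed.
Lemma lr_comm u a v : lmul1 mul u (rmul1 mul a v) = rmul1 mul (lmul1 mul u a) v.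
Proof. destruct u, v; simpl; auto; apply assoc. Qed.


Lemma RstarIn_refl Q a : RstarIn mul Q a a.
Proof. intros x y _ _; tauto. Qed.
Lemma RstarIn_sym Q a b : RstarIn mul Q a b -> RstarIn mul Q b a.
Proof. intros H x y Hx Hy; specialize (H x y Hx Hy); tauto. Qed.
Lemma RstarIn_trans Q a b c : RstarIn mul Q a b -> RstarIn mul Q b c -> RstarIn mul Q a c.
Proof. intros H1 H2 x y Hx Hy; specialize (H1 x y Hx Hy); specialize (H2 x y Hx Hy); tauto. Qed.
Lemma LstarIn_refl Q a : LstarIn mul Q a a.
Proof. intros x y _ _; tauto. Qed.
Lemma LstarIn_sym Q a b : LstarIn mul Q a b -> LstarIn mul Q b a.
Proof. intros H x y Hx Hy; specialize (H x y Hx Hy); tauto. Qed.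
Lemma LstarIn_trans Q a b c : LstarIn mul Q a b -> LstarIn mul Q b c -> LstarIn mul Q a c.
Proof. intros H1 H2 x y Hx Hy; specialize (H1 x y Hx Hy); specialize (H2 x y Hx Hy); tauto. Qed.

Lemma Rstar_In Q a b : Rstar mul a b -> RstarIn mul Q a b.
Proof. intros H x y _ _; apply H; apply in1_full. Qed.
Lemma Lstar_In Q a b : Lstar mul a b -> LstarIn mul Q a b.
Proof. intros H x y _ _; apply H; apply in1_full. Qed.

Lemma RstarIn_idem Q a e : Q e -> idempotent mul e -> RstarIn mul Q a e -> mul e a = a.
Proof. intros He Hi H. exact (proj2 (H (Some e) None He I) Hi). Qed.
Lemma LstarIn_idem Q a f : Q f -> idempotent mul f -> LstarIn mul Q a f -> mul a f = a.
Proof. intros He Hi H. exact (proj2 (H (Some f) None He I) Hi). Qed.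

Lemma Rstar_can a b x y : Rstar mul a b -> mul x a = mul y a -> mul x b = mul y b.
Proof. intros H E. exact (proj1 (H (Some x) (Some y) I I) E). Qed.
Lemma Lstar_can a b x y : Lstar mul a b -> mul a x = mul a y -> mul b x = mul b y.
Proof. intros H E. exact (proj1 (H (Some x) (Some y) I I) E). Qed.

Lemma GreenL_idem e p : idempotent mul e -> idempotent mul p -> GreenL mul e p ->
  mul e p = e /\ mul p e = p.
Proof.
  intros He Hp [x [y [H1 H2]]]. split.
  - rewrite H1. rewrite <- lmul1_mul, Hp. reflexivity.
  - rewrite H2. rewrite <- lmul1_mul, He. reflexivity.
Qed.
Lemma GreenR_idem f q : idempotent mul f -> idempotent mul q -> GreenR mul f q ->
  mul q f = f /\ mul f q = q.
Proof.
  intros Hf Hq [x [y [H1 H2]]]. split.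
  - rewrite H1. rewrite <- rmul1_mul, Hq. reflexivity.
  - rewrite H2. rewrite <- rmul1_mul, Hf. reflexivity.
Qed.

Lemma GreenR_Rstar a b : GreenR mul a b -> Rstar mul a b.
Proof.
  intros [x [y [H1 H2]]] u v _ _. split; intro E.
  - rewrite H2, !lr_comm, E. reflexivity.
  - rewrite H1, !lr_comm, E. reflexivity.
Qed.
Lemma GreenL_Lstar a b : GreenL mul a b -> Lstar mul a b.
Proof.
  intros [x [y [H1 H2]]] u v _ _. split; intro E.
  - rewrite H2, <- !lr_comm, E. reflexivity.
  - rewrite H1, <- !lr_comm, E. reflexivity.
Qed.

Lemma la_f f q : left_adequate mul -> idempotent mul f -> idempotent mul q ->
  GreenR mul f q -> f = q.
Proof.
  intros [_ H] Hf Hq G. apply (H f f q Hf Hq).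
  - apply RstarIn_refl.
  - apply GreenR_Rstar; exact G.
Qed.
Lemma ra_g g p : right_adequate mul -> idempotent mul g -> idempotent mul p ->
  GreenL mul g p -> g = p.
Proof.
  intros [_ H] Hf Hq G. apply (H g g p Hf Hq).
  - apply LstarIn_refl.
  - apply GreenL_Lstar; exact G.
Qed.

Lemma RstarIn_ext Q Q' a b : (forall z, Q z <-> Q' z) -> RstarIn mul Q a b -> RstarIn mul Q' a b.
Proof.
  intros E H x y Hx Hy. apply H.
  - destruct x; simpl in *; auto; apply E; auto.
  - destruct y; simpl in *; auto; apply E; auto.
Qed.
Lemma LstarIn_ext Q Q' a b : (forall z, Q z <-> Q' z) -> LstarIn mul Q a b -> LstarIn mul Q' a b.
Proof.
  intros E H x y Hx Hy. apply H.
  - destruct x; simpl in *; auto; apply E; auto.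
  - destruct y; simpl in *; auto; apply E; auto.
Qed.

Variable P : T -> Prop.
Hypothesis HT : adequate_transversal mul P.
Hypothesis HQ : quasi_ideal mul P.

Lemma P_mul a b : P a -> P b -> P (mul a b).
Proof. destruct HT as [[H _] _]. apply H. Qed.
Lemma P_plus s : P s -> exists p, is_plus mul P s p.
Proof. destruct HT as [_ [[H _] _]]. intros Hs. destruct (H s Hs) as [[e He] _]. exists e; exact He. Qed.
Lemma P_star s : P s -> exists q, is_star mul P s q.
Proof. destruct HT as [_ [[H _] _]]. intros Hs. destruct (H s Hs) as [_ [e He]]. exists e; exact He. Qed.
Lemma P_Rstar a b : P a -> P b -> RstarIn mul P a b -> Rstar mul a b.
Proof. destruct HT as [[_ [_ [_ H]]] _]. intros Ha Hb. apply H; auto. Qed.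
Lemma P_Lstar a b : P a -> P b -> LstarIn mul P a b -> Lstar mul a b.
Proof. destruct HT as [[_ [_ [H _]]] _]. intros Ha Hb. apply H; auto. Qed.
Lemma P_comm e f : P e -> P f -> idempotent mul e -> idempotent mul f -> mul e f = mul f e.
Proof. destruct HT as [_ [[_ H] _]]. apply H. Qed.
Lemma bar_ex x : exists s, is_bar mul P x s.
Proof. destruct HT as [_ [_ H]]. destruct (H x) as [s [Hs _]]. exists s; exact Hs. Qed.
Lemma bar_unique x s s' : is_bar mul P x s -> is_bar mul P x s' -> s = s'.
Proof.
  destruct HT as [_ [_ H]]. intros H1 H2. destruct (H x) as [s0 [_ U]].
  rewrite <- (U s H1), <- (U s' H2). reflexivity.
Qed.

Lemma plus_unique s p p' : is_plus mul P s p -> is_plus mul P s p' -> p = p'.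
Proof.
  intros [Pp [Ip Hp]] [Pp' [Ip' Hp']].
  assert (H1 : RstarIn mul P p p') by (eapply RstarIn_trans; [apply RstarIn_sym; exact Hp| exact Hp']).
  assert (E1 : mul p' p = p) by (apply (@RstarIn_idem P); auto).
  assert (E2 : mul p p' = p') by (apply (@RstarIn_idem P); auto; apply RstarIn_sym; auto).
  transitivity (mul p' p); [symmetry; exact E1|]. rewrite P_comm; auto.
Qed.
Lemma star_unique s p p' : is_star mul P s p -> is_star mul P s p' -> p = p'.
Proof.
  intros [Pp [Ip Hp]] [Pp' [Ip' Hp']].
  assert (H1 : LstarIn mul P p p') by (eapply LstarIn_trans; [apply LstarIn_sym; exact Hp| exact Hp']).
  assert (E1 : mul p p' = p) by (apply (@LstarIn_idem P); auto).
  assert (E2 : mul p' p = p') by (apply (@LstarIn_idem P); auto; apply LstarIn_sym; auto).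
  transitivity (mul p p'); [symmetry; exact E1|]. rewrite P_comm; auto.
Qed.

Lemma plus_mul s p : is_plus mul P s p -> mul p s = s.
Proof. intros [Pp [Ip Hp]]. apply (@RstarIn_idem P); auto. Qed.
Lemma star_mul s q : is_star mul P s q -> mul s q = s.
Proof. intros [Pp [Ip Hp]]. apply (@LstarIn_idem P); auto. Qed.

Definition dec x e s f p q :=
  P s /\ idempotent mul e /\ idempotent mul f /\ x = mul (mul e s) f /\
  is_plus mul P s p /\ GreenL mul e p /\ is_star mul P s q /\ GreenR mul f q.

Lemma is_bar_dec x s : is_bar mul P x s <-> exists e f p q, dec x e s f p q.
Proof.
  split.
  - intros [Ps [e [f [Ie [If [E [[p [H1 H2]] [q [H3 H4]]]]]]]]].
    exists e, f, p, q. unfold dec. tauto.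
  - intros [e [f [p [q [Ps [Ie [If [E [H1 [H2 [H3 H4]]]]]]]]]]].
    split; auto. exists e, f. split; [auto|split;[auto|split;[auto|split]]]; [exists p|exists q]; auto.
Qed.

Lemma dec_facts x e s f p q : dec x e s f p q ->
  mul e p = e /\ mul p e = p /\ mul q f = f /\ mul f q = q /\ mul p s = s /\ mul s q = s
  /\ idempotent mul p /\ idempotent mul q /\ P p /\ P q.
Proof.
  intros [Ps [Ie [If [E [Hp [G1 [Hq G2]]]]]]].
  pose proof Hp as [Pp [Ip _]]. pose proof Hq as [Pq [Iq _]].
  destruct (GreenL_idem Ie Ip G1). destruct (GreenR_idem If Iq G2).
  repeat split; auto. apply (plus_mul Hp). apply (star_mul Hq).
Qed.

Lemma dec_Rstar x e s f p q : dec x e s f p q -> Rstar mul x e.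
Proof.
  intros D. pose proof (dec_facts D) as [F1 [F2 [F3 [F4 [F5 [F6 _]]]]]].
  destruct D as [Ps [Ie [If [E [Hp [G1 [Hq G2]]]]]]].
  pose proof Hp as [Pp [Ip Hp']].
  assert (Rs : Rstar mul s p) by (apply P_Rstar; auto).
  intros u v _ _. split; intro H.
  - rewrite E, !lmul1_mul in H.
    apply (f_equal (fun z => mul z q)) in H.
    rewrite <- !assoc, F4, F6 in H.
    apply (Rstar_can Rs) in H. rewrite <- !lmul1_mul, F1 in H. exact H.
  - rewrite E, !lmul1_mul, H. reflexivity.
Qed.

Lemma dec_Lstar x e s f p q : dec x e s f p q -> Lstar mul x f.
Proof.
  intros D. pose proof (dec_facts D) as [F1 [F2 [F3 [F4 [F5 [F6 _]]]]]].
  destruct D as [Ps [Ie [If [E [Hp [G1 [Hq G2]]]]]]].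
  pose proof Hq as [Pq [Iq Hq']].
  assert (Ls : Lstar mul s q) by (apply P_Lstar; auto).
  intros u v _ _. split; intro H.
  - rewrite E, !rmul1_mul in H.
    apply (f_equal (fun z => mul p z)) in H.
    rewrite !assoc, F2, F5 in H.
    apply (Lstar_can Ls) in H. rewrite <- !rmul1_mul, F3 in H. exact H.
  - rewrite E, !rmul1_mul, H. reflexivity.
Qed.

Lemma dec_unique x e s f p q e' f' p' q' :
  dec x e s f p q -> dec x e' s f' p' q' -> e = e' /\ f = f'.
Proof.
  intros D D'.
  pose proof (dec_Rstar D) as R1. pose proof (dec_Rstar D') as R2.
  pose proof (dec_Lstar D) as L1. pose proof (dec_Lstar D') as L2.
  pose proof (dec_facts D) as [F1 [F2 [F3 [F4 _]]]].
  pose proof (dec_facts D') as [F1' [F2' [F3' [F4' _]]]].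
  destruct D as [Ps [Ie [If [E [Hp [G1 [Hq G2]]]]]]].
  destruct D' as [_ [Ie' [If' [E' [Hp' [G1' [Hq' G2']]]]]]].
  pose proof (plus_unique Hp Hp') as <-. pose proof (star_unique Hq Hq') as <-.
  split.
  - assert (Ree : Rstar mul e e') by (eapply RstarIn_trans; [apply RstarIn_sym; exact R1|exact R2]).
    assert (A : mul e e' = e') by (exact (proj1 (Ree (Some e) None I I) Ie)).
    rewrite <- A. rewrite <- F1 at 2. rewrite <- assoc, F2'. symmetry; exact F1.
  - assert (Lff : Lstar mul f f') by (eapply LstarIn_trans; [apply LstarIn_sym; exact L1|exact L2]).
    assert (A : mul f' f = f') by (exact (proj1 (Lff (Some f) None I I) If)).
    rewrite <- A. rewrite <- F3 at 2. rewrite assoc, F4'. symmetry; exact F3.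
Qed.

Lemma prod_dec x e s f p q y g t h p2 q2 :
  dec x e s f p q -> dec y g t h p2 q2 ->
  P (mul f g) /\
  exists p' q', dec (mul x y) (mul e p') (mul (mul s (mul f g)) t) (mul q' h) p' q'.
Proof.
  intros D1 D2.
  pose proof (dec_facts D1) as [F1 [F2 [F3 [F4 [F5 [F6 [Ip [Iq [Pp Pq]]]]]]]]].
  pose proof (dec_facts D2) as [F1' [F2' [F3' [F4' [F5' [F6' [Ip2 [Iq2 [Pp2 Pq2]]]]]]]]].
  destruct D1 as [Ps [Ie [If [Ex [Hp [G1 [Hq G2]]]]]]].
  destruct D2 as [Pt [Ig [Ih [Ey [Hp2 [G1' [Hq2 G2']]]]]]].
  assert (Pfg : P (mul f g)).
  { assert (E : mul f g = mul (mul q (mul f g)) p2).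
    { rewrite assoc, F3, <- assoc, F1'. reflexivity. }
    rewrite E. apply HQ; auto. }
  split; [exact Pfg|].
  set (u := mul (mul s (mul f g)) t).
  assert (Pu : P u) by (apply P_mul; auto; apply P_mul; auto).
  destruct (P_plus Pu) as [p' Hp']. destruct (P_star Pu) as [q' Hq'].
  pose proof Hp' as [Pp' [Ip' Rp']]. pose proof Hq' as [Pq' [Iq' Lq']].
  assert (Hpu : mul p u = u) by (unfold u; rewrite !assoc, F5; reflexivity).
  assert (Huq : mul u q2 = u) by (unfold u; rewrite <- assoc, F6'; reflexivity).
  assert (A1 : mul p p' = p') by (exact (proj1 (Rp' (Some p) None Pp I) Hpu)).
  assert (A2 : mul p' p = p') by (rewrite <- (P_comm Pp Pp' Ip Ip'); exact A1).
  assert (B1 : mul q' q2 = q') by (exact (proj1 (Lq' (Some q2) None Pq2 I) Huq)).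
  assert (B2 : mul q2 q' = q') by (rewrite (P_comm Pq2 Pq' Iq2 Iq'); exact B1).
  assert (C1 : mul p' e = p') by (rewrite <- A2 at 1; rewrite <- assoc, F2; exact A2).
  assert (C2 : mul h q' = q') by (rewrite <- B2 at 1; rewrite assoc, F4'; exact B2).
  pose proof (plus_mul Hp') as D1. pose proof (star_mul Hq') as D2.
  exists p', q'. unfold dec. split; [exact Pu|]. split.
  { unfold idempotent. rewrite <- assoc, (assoc p' e p'), C1, Ip'. reflexivity. }
  split.
  { unfold idempotent. rewrite <- assoc, (assoc h q' h), C2, assoc, Iq'. reflexivity. }
  split.
  { rewrite <- (assoc e p' u), D1, <- (assoc e u), (assoc u q' h), D2.
    rewrite Ex, Ey. unfold u. rewrite <- !assoc. reflexivity. }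
  split; [exact Hp'|]. split.
  { exists (Some e), (Some p'). simpl. split; [reflexivity|].
    rewrite assoc, C1, Ip'. reflexivity. }
  split; [exact Hq'|].
  { exists (Some h), (Some q'). simpl. split; [reflexivity|].
    rewrite <- assoc, C2, Iq'. reflexivity. }
Qed.

Lemma bar_self_dec s : P s -> exists p q, dec s p s q p q.
Proof.
  intros Ps. destruct (P_plus Ps) as [p Hp]. destruct (P_star Ps) as [q Hq].
  exists p, q. pose proof Hp as [Pp [Ip _]]. pose proof Hq as [Pq [Iq _]].
  unfold dec. split; [auto|]. split; [auto|]. split; [auto|]. split.
  { rewrite (plus_mul Hp), (star_mul Hq). reflexivity. }
  split; [auto|]. split. { exists None, None; simpl; auto. }
  split; [auto|]. exists None, None; simpl; auto.
Qed.
Lemma bar_self s : P s -> is_bar mul P s s.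
Proof. intros Ps. apply is_bar_dec. destruct (bar_self_dec Ps) as [p [q D]]. exists p, q, p, q. exact D. Qed.

Lemma idem_bar e p : idempotent mul e -> idempotent mul p -> P p -> GreenL mul e p -> dec e e p p p p.
Proof.
  intros Ie Ip Pp G. destruct (GreenL_idem Ie Ip G) as [E1 E2].
  unfold dec. split; [auto|]. split; [auto|]. split; [auto|]. split.
  { rewrite E1, E1. reflexivity. }
  split. { split; [auto|split; [auto|apply RstarIn_refl]]. }
  split; [auto|]. split. { split; [auto|split; [auto|apply LstarIn_refl]]. }
  exists None, None; simpl; auto.
Qed.

Lemma idem_barR f q : idempotent mul f -> idempotent mul q -> P q -> GreenR mul f q -> dec f q q f q q.
Proof.
  intros If Iq Pq G. destruct (GreenR_idem If Iq G) as [E1 E2].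
  unfold dec. split; [auto|]. split; [auto|]. split; [auto|]. split.
  { rewrite Iq, E1. reflexivity. }
  split. { split; [auto|split; [auto|apply RstarIn_refl]]. }
  split. { exists None, None; simpl; auto. }
  split. { split; [auto|split; [auto|apply LstarIn_refl]]. }
  exact G.
Qed.
End Gen.

Section Tr.
Variables (A B : Type) (mA : A -> A -> A) (mB : B -> B -> B) (i : A -> B).
Hypothesis inj : injective i.
Hypothesis mor : morphism mA mB i.

Lemma lmul1_tr x a : lmul1 mB (option_map i x) (i a) = i (lmul1 mA x a).
Proof. destruct x; simpl; auto; symmetry; apply mor. Qed.
Lemma rmul1_tr x a : rmul1 mB (i a) (option_map i x) = i (rmul1 mA a x).
Proof. destruct x; simpl; auto; symmetry; apply mor. Qed.

Lemma in1_image x : in1 (image i) x -> exists x', x = option_map i x'.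
Proof.
  destruct x as [b|]; simpl.
  - intros [a ->]. exists (Some a); reflexivity.
  - intros _. exists None; reflexivity.
Qed.
Lemma in1_image_map x : in1 (image i) (option_map i x).
Proof. destruct x; simpl; auto. exists a; reflexivity. Qed.

Lemma inj_iff a b : i a = i b <-> a = b.
Proof. split; [apply inj| intros ->; reflexivity]. Qed.

Lemma tr_Rstar u v : RstarIn mB (image i) (i u) (i v) <-> Rstar mA u v.
Proof.
  split.
  - intros H x y _ _. pose proof (H (option_map i x) (option_map i y) (in1_image_map x) (in1_image_map y)) as H'.
    rewrite !lmul1_tr, !inj_iff in H'. exact H'.
  - intros H x y Hx Hy. destruct (in1_image Hx) as [x' ->]. destruct (in1_image Hy) as [y' ->].
    rewrite !lmul1_tr, !inj_iff. apply H; apply in1_full.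
Qed.
Lemma tr_Lstar u v : LstarIn mB (image i) (i u) (i v) <-> Lstar mA u v.
Proof.
  split.
  - intros H x y _ _. pose proof (H (option_map i x) (option_map i y) (in1_image_map x) (in1_image_map y)) as H'.
    rewrite !rmul1_tr, !inj_iff in H'. exact H'.
  - intros H x y Hx Hy. destruct (in1_image Hx) as [x' ->]. destruct (in1_image Hy) as [y' ->].
    rewrite !rmul1_tr, !inj_iff. apply H; apply in1_full.
Qed.
Lemma tr_idem u : idempotent mB (i u) <-> idempotent mA u.
Proof. unfold idempotent. rewrite <- mor. apply inj_iff. Qed.
End Tr.

Section Sub.
Variables (T : Type) (mul : T -> T -> T).
Hypothesis assoc : associative mul.
Variable Q : T -> Prop.
Hypothesis Qmul : forall a b, Q a -> Q b -> Q (mul a b).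

Definition mulQ (a b : sig Q) : sig Q :=
  exist Q (mul (proj1_sig a) (proj1_sig b)) (Qmul (proj2_sig a) (proj2_sig b)).

Lemma sig_eq (a b : sig Q) : proj1_sig a = proj1_sig b -> a = b.
Proof. destruct a as [a ha], b as [b hb]; simpl; intros ->. f_equal. apply proof_irrelevance. Qed.
Lemma sig_eq_iff (a b : sig Q) : a = b <-> proj1_sig a = proj1_sig b.
Proof. split; [intros ->; reflexivity|apply sig_eq]. Qed.

Lemma assoc_sub : associative mulQ.
Proof. intros a b c. apply sig_eq; simpl. apply assoc. Qed.

Lemma val_lmul1 X a : proj1_sig (lmul1 mulQ X a) = lmul1 mul (option_map (@proj1_sig T Q) X) (proj1_sig a).
Proof. destruct X; reflexivity. Qed.
Lemma val_rmul1 a X : proj1_sig (rmul1 mulQ a X) = rmul1 mul (proj1_sig a) (option_map (@proj1_sig T Q) X).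
Proof. destruct X; reflexivity. Qed.

Lemma idem_sub a : idempotent mulQ a <-> idempotent mul (proj1_sig a).
Proof. unfold idempotent. rewrite sig_eq_iff. reflexivity. Qed.

Lemma Rstar_sub a b : Rstar mul (proj1_sig a) (proj1_sig b) -> Rstar mulQ a b.
Proof.
  intros H X Y _ _. rewrite !sig_eq_iff, !val_lmul1. apply H; apply in1_full.
Qed.
Lemma Lstar_sub a b : Lstar mul (proj1_sig a) (proj1_sig b) -> Lstar mulQ a b.
Proof.
  intros H X Y _ _. rewrite !sig_eq_iff, !val_rmul1. apply H; apply in1_full.
Qed.

Variable P' : T -> Prop.
Hypothesis HP' : forall x, P' x -> Q x.

Lemma lift1 x : in1 P' x -> exists X : option (sig Q), in1 (fun z => P' (proj1_sig z)) X /\ x = option_map (@proj1_sig T Q) X.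
Proof.
  destruct x as [t|]; simpl; intros H.
  - exists (Some (exist Q t (HP' H))). simpl. auto.
  - exists None. simpl. auto.
Qed.
Lemma map1 X : in1 (fun z => P' (proj1_sig z)) X -> in1 P' (option_map (@proj1_sig T Q) X).
Proof. destruct X; simpl; auto. Qed.

Lemma RstarIn_sub a b : RstarIn mulQ (fun z => P' (proj1_sig z)) a b <-> RstarIn mul P' (proj1_sig a) (proj1_sig b).
Proof.
  split.
  - intros H x y Hx Hy. destruct (lift1 Hx) as [X [HX ->]]. destruct (lift1 Hy) as [Y [HY ->]].
    specialize (H X Y HX HY). rewrite !sig_eq_iff, !val_lmul1 in H. exact H.
  - intros H X Y HX HY. rewrite !sig_eq_iff, !val_lmul1. apply H; apply map1; auto.
Qed.
Lemma LstarIn_sub a b : LstarIn mulQ (fun z => P' (proj1_sig z)) a b <-> LstarIn mul P' (proj1_sig a) (proj1_sig b).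
Proof.
  split.
  - intros H x y Hx Hy. destruct (lift1 Hx) as [X [HX ->]]. destruct (lift1 Hy) as [Y [HY ->]].
    specialize (H X Y HX HY). rewrite !sig_eq_iff, !val_rmul1 in H. exact H.
  - intros H X Y HX HY. rewrite !sig_eq_iff, !val_rmul1. apply H; apply map1; auto.
Qed.

Lemma GreenL_sub a b : GreenL mulQ a b -> GreenL mul (proj1_sig a) (proj1_sig b).
Proof.
  intros [X [Y [H1 H2]]]. exists (option_map (@proj1_sig T Q) X), (option_map (@proj1_sig T Q) Y).
  split; [rewrite H1 at 1|rewrite H2 at 1]; apply val_lmul1.
Qed.
Lemma GreenR_sub a b : GreenR mulQ a b -> GreenR mul (proj1_sig a) (proj1_sig b).
Proof.
  intros [X [Y [H1 H2]]]. exists (option_map (@proj1_sig T Q) X), (option_map (@proj1_sig T Q) Y).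
  split; [rewrite H1 at 1|rewrite H2 at 1]; apply val_rmul1.
Qed.
End Sub.
Set Default Proof Using "All".
Set Implicit Arguments.
Unset Strict Implicit.

Section Part1.
Variables (L R S0 : Type) (mulL : L -> L -> L) (mulR : R -> R -> R)
  (mul0 : S0 -> S0 -> S0) (iL : S0 -> L) (iR : S0 -> R)
  (barL : L -> S0) (barR : R -> S0).
Hypotheses (aL : associative mulL) (aR : associative mulR) (a0 : associative mul0)
  (laL : left_adequate mulL) (raR : right_adequate mulR)
  (injL : injective iL) (morL : morphism mul0 mulL iL)
  (injR : injective iR) (morR : morphism mul0 mulR iR)
  (atL : adequate_transversal mulL (image iL)) (qiL : quasi_ideal mulL (image iL))
  (atR : adequate_transversal mulR (image iR)) (qiR : quasi_ideal mulR (image iR))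
  (bL : forall x, is_bar mulL (image iL) x (iL (barL x)))
  (bR : forall a, is_bar mulR (image iR) a (iR (barR a))).

Lemma imL u : image iL (iL u). Proof. exists u; reflexivity. Qed.
Lemma imR u : image iR (iR u). Proof. exists u; reflexivity. Qed.

Lemma bL0 u : barL (iL u) = u.
Proof. apply injL. apply (bar_unique aL atL qiL (bL (iL u))). apply (bar_self aL atL qiL). apply imL. Qed.
Lemma bR0 u : barR (iR u) = u.
Proof. apply injR. apply (bar_unique aR atR qiR (bR (iR u))). apply (bar_self aR atR qiR). apply imR. Qed.

Lemma s0_plus u : exists w, idempotent mul0 w /\ Rstar mul0 u w.
Proof.
  destruct (P_plus aL atL qiL (imL u)) as [p [[w ->] [Ip Rp]]].
  exists w. split; [apply (tr_idem injL morL); exact Ip| apply (tr_Rstar injL morL); exact Rp].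
Qed.
Lemma s0_star u : exists w, idempotent mul0 w /\ Lstar mul0 u w.
Proof.
  destruct (P_star aL atL qiL (imL u)) as [p [[w ->] [Ip Rp]]].
  exists w. split; [apply (tr_idem injL morL); exact Ip| apply (tr_Lstar injL morL); exact Rp].
Qed.
Lemma s0_comm w w' : idempotent mul0 w -> idempotent mul0 w' -> mul0 w w' = mul0 w' w.
Proof.
  intros H1 H2. apply injL. rewrite !morL. apply (P_comm aL atL qiL); try apply imL;
  apply (tr_idem injL morL); auto.
Qed.
Lemma s0_plus_unique u w w' : idempotent mul0 w -> Rstar mul0 u w ->
  idempotent mul0 w' -> Rstar mul0 u w' -> w = w'.
Proof.
  intros I1 R1 I2 R2. apply injL. apply (plus_unique aL atL qiL (s:=iL u)).
  - split; [apply imL|split; [apply (tr_idem injL morL); auto|apply (tr_Rstar injL morL); auto]].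
  - split; [apply imL|split; [apply (tr_idem injL morL); auto|apply (tr_Rstar injL morL); auto]].
Qed.
Lemma s0_star_unique u w w' : idempotent mul0 w -> Lstar mul0 u w ->
  idempotent mul0 w' -> Lstar mul0 u w' -> w = w'.
Proof.
  intros I1 R1 I2 R2. apply injL. apply (star_unique aL atL qiL (s:=iL u)).
  - split; [apply imL|split; [apply (tr_idem injL morL); auto|apply (tr_Lstar injL morL); auto]].
  - split; [apply imL|split; [apply (tr_idem injL morL); auto|apply (tr_Lstar injL morL); auto]].
Qed.
Lemma Rstar0_L u w : Rstar mul0 u w -> Rstar mulL (iL u) (iL w).
Proof. intros H. apply (P_Rstar aL atL qiL); try apply imL. apply (tr_Rstar injL morL); auto. Qed.
Lemma Lstar0_L u w : Lstar mul0 u w -> Lstar mulL (iL u) (iL w).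
Proof. intros H. apply (P_Lstar aL atL qiL); try apply imL. apply (tr_Lstar injL morL); auto. Qed.
Lemma Rstar0_R u w : Rstar mul0 u w -> Rstar mulR (iR u) (iR w).
Proof. intros H. apply (P_Rstar aR atR qiR); try apply imR. apply (tr_Rstar injR morR); auto. Qed.
Lemma Lstar0_R u w : Lstar mul0 u w -> Lstar mulR (iR u) (iR w).
Proof. intros H. apply (P_Lstar aR atR qiR); try apply imR. apply (tr_Lstar injR morR); auto. Qed.

Lemma decL x : exists e w w', idempotent mul0 w /\ Rstar mul0 (barL x) w /\
  idempotent mul0 w' /\ Lstar mul0 (barL x) w' /\
  dec mulL (image iL) x e (iL (barL x)) (iL w') (iL w) (iL w').
Proof.
  destruct (proj1 (is_bar_dec aL atL qiL _ _) (bL x)) as [e [f [p [q D]]]].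
  pose proof (dec_facts aL atL qiL D) as [_ [_ [_ [_ [_ [_ [Ip [Iq [Pp Pq]]]]]]]]].
  pose proof D as [_ [_ [If [_ [[_ [_ Rp]] [_ [[_ [_ Lq]] G2]]]]]]].
  assert (f = q) as -> by (apply (la_f aL laL If Iq G2)).
  destruct Pp as [w ->]. destruct Pq as [w' ->].
  exists e, w, w'. split; [apply (tr_idem injL morL); auto|].
  split; [apply (tr_Rstar injL morL); auto|].
  split; [apply (tr_idem injL morL); auto|].
  split; [apply (tr_Lstar injL morL); auto|]. exact D.
Qed.

Lemma decR a : exists h w w', idempotent mul0 w /\ Rstar mul0 (barR a) w /\
  idempotent mul0 w' /\ Lstar mul0 (barR a) w' /\
  dec mulR (image iR) a (iR w) (iR (barR a)) h (iR w) (iR w').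
Proof.
  destruct (proj1 (is_bar_dec aR atR qiR _ _) (bR a)) as [e [f [p [q D]]]].
  pose proof (dec_facts aR atR qiR D) as [_ [_ [_ [_ [_ [_ [Ip [Iq [Pp Pq]]]]]]]]].
  pose proof D as [_ [Ie [_ [_ [[_ [_ Rp]] [G1 [[_ [_ Lq]] _]]]]]]].
  assert (e = p) as -> by (apply (ra_g aR raR Ie Ip G1)).
  destruct Pp as [w ->]. destruct Pq as [w' ->].
  exists f, w, w'. split; [apply (tr_idem injR morR); auto|].
  split; [apply (tr_Rstar injR morR); auto|].
  split; [apply (tr_idem injR morR); auto|].
  split; [apply (tr_Lstar injR morR); auto|]. exact D.
Qed.

Lemma decL_e x : exists e w, idempotent mul0 w /\ Rstar mul0 (barL x) w /\
  idempotent mulL e /\ GreenL mulL e (iL w) /\ x = mulL e (iL (barL x)) /\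
  Rstar mulL x e /\ barL e = w.
Proof.
  destruct (decL x) as [e [w [w' [I1 [R1 [I2 [L2 D]]]]]]].
  pose proof (dec_facts aL atL qiL D) as [_ [_ [_ [_ [_ [F6 [Ip _]]]]]]].
  pose proof (dec_Rstar aL atL qiL D) as Re.
  pose proof D as [_ [Ie [_ [Ex [_ [G1 _]]]]]].
  exists e, w. refine (conj I1 (conj R1 (conj Ie (conj G1 (conj _ (conj Re _)))))).
  { rewrite Ex at 1. rewrite <- aL, F6. reflexivity. }
  apply injL. apply (bar_unique aL atL qiL (bL e)).
  apply (is_bar_dec aL atL qiL). exists e, (iL w), (iL w), (iL w).
  apply (idem_bar aL atL qiL); auto. apply imL.
Qed.

Lemma decL_f x : exists w', idempotent mul0 w' /\ Lstar mul0 (barL x) w' /\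
  Lstar mulL x (iL w') /\ mulL x (iL w') = x.
Proof.
  destruct (decL x) as [e [w [w' [I1 [R1 [I2 [L2 D]]]]]]].
  pose proof (dec_Lstar aL atL qiL D) as Lf.
  pose proof (dec_facts aL atL qiL D) as [_ [_ [_ [_ [_ [F6 [Ip [Iq _]]]]]]]].
  pose proof D as [_ [_ [_ [Ex _]]]].
  exists w'. refine (conj I2 (conj L2 (conj Lf _))).
  rewrite Ex at 1. rewrite <- (aL _ (iL w') (iL w')), Iq. symmetry; exact Ex.
Qed.

Lemma decR_f a : exists h w', idempotent mul0 w' /\ Lstar mul0 (barR a) w' /\
  idempotent mulR h /\ GreenR mulR h (iR w') /\ a = mulR (iR (barR a)) h /\
  Lstar mulR a h /\ barR h = w'.
Proof.
  destruct (decR a) as [h [w [w' [I1 [R1 [I2 [L2 D]]]]]]].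
  pose proof (dec_facts aR atR qiR D) as [_ [_ [_ [_ [F5 [_ [Ip [Iq _]]]]]]]].
  pose proof (dec_Lstar aR atR qiR D) as Lh.
  pose proof D as [_ [_ [Ih [Ex [_ [_ [_ G2]]]]]]].
  exists h, w'. refine (conj I2 (conj L2 (conj Ih (conj G2 (conj _ (conj Lh _)))))).
  { rewrite Ex at 1. rewrite F5. reflexivity. }
  apply injR. apply (bar_unique aR atR qiR (bR h)).
  apply (is_bar_dec aR atR qiR). exists (iR w'), h, (iR w'), (iR w').
  apply (idem_barR aR atR qiR); auto. apply imR.
Qed.

Lemma decR_e a : exists w, idempotent mul0 w /\ Rstar mul0 (barR a) w /\
  Rstar mulR a (iR w) /\ mulR (iR w) a = a.
Proof.
  destruct (decR a) as [h [w [w' [I1 [R1 [I2 [L2 D]]]]]]].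
  pose proof (dec_Rstar aR atR qiR D) as Rf.
  pose proof (dec_facts aR atR qiR D) as [_ [_ [_ [_ [F5 [F6 [Ip _]]]]]]].
  pose proof D as [_ [_ [_ [Ex _]]]].
  exists w. refine (conj I1 (conj R1 (conj Rf _))).
  rewrite Ex at 1. rewrite !aR, Ip. symmetry; exact Ex.
Qed.

Lemma F2 x u : barL (mulL x (iL u)) = mul0 (barL x) u.
Proof.
  destruct (decL x) as [e [w [w' [I1 [R1 [I2 [L2 D]]]]]]].
  destruct (bar_self_dec aL atL qiL (imL u)) as [p2 [q2 D2]].
  pose proof (dec_facts aL atL qiL D) as [_ [_ [_ [_ [_ [F6 _]]]]]].
  pose proof (dec_facts aL atL qiL D2) as [_ [_ [_ [_ [F5' _]]]]].
  destruct (prod_dec aL atL qiL D D2) as [_ [p' [q' D3]]].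
  apply injL. apply (bar_unique aL atL qiL (bL _)).
  apply (is_bar_dec aL atL qiL). exists (mulL e p'), (mulL q' q2), p', q'.
  rewrite (aL _ (iL w') p2), F6, <- aL, F5' in D3. rewrite morL. exact D3.
Qed.

Lemma F3 u a : barR (mulR (iR u) a) = mul0 u (barR a).
Proof.
  destruct (decR a) as [h [w [w' [I1 [R1 [I2 [L2 D]]]]]]].
  destruct (bar_self_dec aR atR qiR (imR u)) as [p2 [q2 D2]].
  pose proof (dec_facts aR atR qiR D) as [_ [_ [_ [_ [F5 _]]]]].
  pose proof (dec_facts aR atR qiR D2) as [_ [_ [_ [_ [_ [F6' _]]]]]].
  destruct (prod_dec aR atR qiR D2 D) as [_ [p' [q' D3]]].
  apply injR. apply (bar_unique aR atR qiR (bR _)).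
  apply (is_bar_dec aR atR qiR). exists (mulR p2 p'), (mulR q' h), p', q'.
  rewrite (aR _ q2 (iR w)), F6', <- aR, F5 in D3. rewrite morR. exact D3.
Qed.


Local Notation LRt := (LR barL barR).
Local Notation mLR := (mulLR mulL mulR iL iR barL barR).

Lemma closed : LR_closed mulL mulR iL iR barL barR.
Proof.
  intros [[x a] h] [[y b] k]. unfold LR_first, LR_second; simpl in *.
  rewrite F2, F3, h, k. reflexivity.
Qed.

Definition pl (p : LRt) : L := fst (proj1_sig p).
Definition pr (p : LRt) : R := snd (proj1_sig p).
Definition bb (p : LRt) : S0 := barL (pl p).
Lemma bb_r p : bb p = barR (pr p).
Proof. destruct p as [[x a] h]; exact h. Qed.
Lemma LR_eq p q : pl p = pl q -> pr p = pr q -> p = q.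
Proof.
  destruct p as [[x a] h], q as [[y b] k]; unfold pl, pr; simpl; intros -> ->.
  f_equal. apply proof_irrelevance.
Qed.
Lemma LR_eq_iff p q : p = q <-> pl p = pl q /\ pr p = pr q.
Proof. split; [intros ->; auto|intros [H1 H2]; apply LR_eq; auto]. Qed.

Lemma mLR_pl p q : pl (mLR p q) = mulL (pl p) (iL (bb q)).
Proof.
  unfold mulLR. destruct (excluded_middle_informative _) as [h|n]; [reflexivity|].
  exfalso; apply n; apply closed.
Qed.
Lemma mLR_pr p q : pr (mLR p q) = mulR (iR (bb p)) (pr q).
Proof.
  unfold mulLR. rewrite bb_r. destruct (excluded_middle_informative _) as [h|n]; [reflexivity|].
  exfalso; apply n; apply closed.
Qed.
Lemma bb_mul p q : bb (mLR p q) = mul0 (bb p) (bb q).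
Proof. unfold bb at 1. rewrite mLR_pl, F2. reflexivity. Qed.

Lemma assocLR : associative mLR.
Proof.
  intros p q r. apply LR_eq.
  - rewrite !mLR_pl, bb_mul, morL, aL. reflexivity.
  - rewrite !mLR_pr, bb_mul, morR, aR. reflexivity.
Qed.

Lemma idem_bb p : idempotent mLR p <-> idempotent mul0 (bb p).
Proof.
  split.
  - intros H. unfold idempotent. rewrite <- bb_mul, H. reflexivity.
  - intros H. apply LR_eq.
    + rewrite mLR_pl. destruct (decL_e (pl p)) as [e [w [_ [_ [_ [_ [Ex _]]]]]]].
      unfold bb. rewrite Ex at 1. rewrite <- aL, <- morL. unfold bb in H. rewrite H. symmetry; exact Ex.
    + rewrite mLR_pr. destruct (decR_f (pr p)) as [h [w' [_ [_ [_ [_ [Ea _]]]]]]].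
      rewrite bb_r in *. rewrite Ea at 2. rewrite aR, <- morR, H. symmetry; exact Ea.
Qed.

Lemma bb_lmul1 X b : bb (lmul1 mLR X b) = lmul1 mul0 (option_map bb X) (bb b).
Proof. destruct X; simpl; [apply bb_mul|reflexivity]. Qed.
Lemma bb_rmul1 b X : bb (rmul1 mLR b X) = rmul1 mul0 (bb b) (option_map bb X).
Proof. destruct X; simpl; [apply bb_mul|reflexivity]. Qed.

Lemma iff_and A B C D : (A <-> C) -> (B <-> D) -> (A /\ B <-> C /\ D).
Proof. tauto. Qed.

Lemma abundant_LR : abundant mLR.
Proof.
  intros p _. split.
  - destruct (decL_e (pl p)) as [e [w [Iw [Rw [Ie [G [Ex [Re Be]]]]]]]].
    destruct (decR_e (pr p)) as [w2 [Iw2 [Rw2 [Ra _]]]].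
    rewrite <- bb_r in Rw2. fold (bb p) in Rw, Ex.
    assert (w2 = w) as -> by (apply (s0_plus_unique Iw2 Rw2 Iw Rw)).
    assert (Eok : barL (fst (e, iR w)) = barR (snd (e, iR w))) by (simpl; rewrite Be, bR0; reflexivity).
    set (E := exist (fun p0 : L * R => barL (fst p0) = barR (snd p0)) (e, iR w) Eok).
    assert (bE : bb E = w) by exact Be.
    assert (eW : mulL e (iL w) = e) by (apply (GreenL_idem aL Ie); auto; apply (tr_idem injL morL); auto).
    exists E. split; [exact I|]. split; [apply idem_bb; rewrite bE; exact Iw|].
    intros X Y _ _. rewrite !LR_eq_iff.
    apply iff_and.
    + assert (K : forall Z, pl (lmul1 mLR Z p) = mulL (match Z with Some q => pl q | None => e end) (iL (bb p))
                /\ pl (lmul1 mLR Z E) = mulL (match Z with Some q => pl q | None => e end) (iL w)).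
      { intros [z|]; simpl; [rewrite !mLR_pl, bE; auto|]. split; [exact Ex|]. unfold pl; simpl. symmetry; exact eW. }
      destruct (K X) as [-> ->]. destruct (K Y) as [-> ->].
      exact ((Rstar0_L Rw : Rstar mulL _ _) (Some _) (Some _) I I).
    + assert (K : forall Z, pr (lmul1 mLR Z p) = lmul1 mulR (option_map (fun q => iR (bb q)) Z) (pr p)
                /\ pr (lmul1 mLR Z E) = lmul1 mulR (option_map (fun q => iR (bb q)) Z) (iR w)).
      { intros [z|]; simpl; [rewrite !mLR_pr; auto|]. split; reflexivity. }
      destruct (K X) as [-> ->]. destruct (K Y) as [-> ->].
      exact (Ra _ _ (in1_full _) (in1_full _)).
  - destruct (decR_f (pr p)) as [h [w' [Iw [Lw [Ih [G [Ea [Lh Bh]]]]]]]].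
    destruct (decL_f (pl p)) as [w2 [Iw2 [Lw2 [La _]]]].
    rewrite <- bb_r in Lw, Ea. fold (bb p) in Lw2.
    assert (w2 = w') as -> by (apply (s0_star_unique Iw2 Lw2 Iw Lw)).
    assert (Fok : barL (fst (iL w', h)) = barR (snd (iL w', h))) by (simpl; rewrite Bh, bL0; reflexivity).
    set (F := exist (fun p0 : L * R => barL (fst p0) = barR (snd p0)) (iL w', h) Fok).
    assert (bF : bb F = w') by (unfold bb, pl; simpl; apply bL0).
    assert (wH : mulR (iR w') h = h) by (apply (GreenR_idem aR Ih); auto; apply (tr_idem injR morR); auto).
    exists F. split; [exact I|]. split; [apply idem_bb; rewrite bF; exact Iw|].
    intros X Y _ _. rewrite !LR_eq_iff.
    apply iff_and.
    + assert (K : forall Z, pl (rmul1 mLR p Z) = rmul1 mulL (pl p) (option_map (fun q => iL (bb q)) Z)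
                /\ pl (rmul1 mLR F Z) = rmul1 mulL (iL w') (option_map (fun q => iL (bb q)) Z)).
      { intros [z|]; simpl; [rewrite !mLR_pl; auto|]. split; reflexivity. }
      destruct (K X) as [-> ->]. destruct (K Y) as [-> ->].
      exact (La _ _ (in1_full _) (in1_full _)).
    + assert (K : forall Z, pr (rmul1 mLR p Z) = mulR (iR (bb p)) (match Z with Some q => pr q | None => h end)
                /\ pr (rmul1 mLR F Z) = mulR (iR w') (match Z with Some q => pr q | None => h end)).
      { intros [z|]; simpl; [rewrite !mLR_pr, bF; auto|]. split; [exact Ea|]. unfold pr; simpl. symmetry; exact wH. }
      destruct (K X) as [-> ->]. destruct (K Y) as [-> ->].
      exact ((Lstar0_R Lw : Lstar mulR _ _) (Some _) (Some _) I I).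
Qed.

Lemma s0_idem_mul u v : idempotent mul0 u -> idempotent mul0 v -> idempotent mul0 (mul0 u v).
Proof.
  intros Hu Hv. unfold idempotent.
  rewrite <- a0, (a0 v u v), <- (s0_comm Hu Hv), <- (a0 u v v), Hv, a0, Hu. reflexivity.
Qed.

Lemma qa_LR : quasi_adequate mLR.
Proof.
  split; [apply abundant_LR|].
  intros e f He Hf. apply idem_bb. apply idem_bb in He. apply idem_bb in Hf.
  rewrite bb_mul. apply s0_idem_mul; auto.
Qed.

Lemma phi_ok u : barL (fst (iL u, iR u)) = barR (snd (iL u, iR u)).
Proof. simpl. rewrite bL0, bR0. reflexivity. Qed.
Definition phi (u : S0) : LRt := exist _ (iL u, iR u) (phi_ok u).
Lemma bb_phi u : bb (phi u) = u.
Proof. unfold bb, pl; simpl. apply bL0. Qed.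
Lemma phi_mul u v : mLR (phi u) (phi v) = phi (mul0 u v).
Proof.
  apply LR_eq.
  - rewrite mLR_pl, bb_phi. unfold pl; simpl. rewrite morL. reflexivity.
  - rewrite mLR_pr, bb_phi. unfold pr; simpl. rewrite morR. reflexivity.
Qed.
Lemma phi_inj : injective phi.
Proof. intros u v H. apply (f_equal pl) in H. unfold pl in H; simpl in H. apply injL; exact H. Qed.
Lemma phi_mor : morphism mul0 mLR phi.
Proof. intros u v. symmetry; apply phi_mul. Qed.

Lemma phi_Rstar u v : Rstar mul0 u v -> Rstar mLR (phi u) (phi v).
Proof.
  intros H X Y _ _. rewrite !LR_eq_iff.
  assert (K : forall Z z, pl (lmul1 mLR Z (phi z)) = lmul1 mulL (option_map pl Z) (iL z)
            /\ pr (lmul1 mLR Z (phi z)) = iR (lmul1 mul0 (option_map bb Z) z)).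
  { intros [q|] z; simpl; [rewrite mLR_pl, mLR_pr, bb_phi, morR; auto|auto]. }
  destruct (K X u) as [-> ->]. destruct (K Y u) as [-> ->].
  destruct (K X v) as [-> ->]. destruct (K Y v) as [-> ->].
  apply iff_and.
  - exact ((Rstar0_L H : Rstar mulL _ _) _ _ (in1_full _) (in1_full _)).
  - rewrite !(inj_iff injR morR). exact (H _ _ (in1_full _) (in1_full _)).
Qed.
Lemma phi_Lstar u v : Lstar mul0 u v -> Lstar mLR (phi u) (phi v).
Proof.
  intros H X Y _ _. rewrite !LR_eq_iff.
  assert (K : forall Z z, pl (rmul1 mLR (phi z) Z) = iL (rmul1 mul0 z (option_map bb Z))
            /\ pr (rmul1 mLR (phi z) Z) = rmul1 mulR (iR z) (option_map pr Z)).
  { intros [q|] z; simpl; [rewrite mLR_pl, mLR_pr, bb_phi, morL; auto|auto]. }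
  destruct (K X u) as [-> ->]. destruct (K Y u) as [-> ->].
  destruct (K X v) as [-> ->]. destruct (K Y v) as [-> ->].
  apply iff_and.
  - rewrite !(inj_iff injL morL). exact (H _ _ (in1_full _) (in1_full _)).
  - exact ((Lstar0_R H : Lstar mulR _ _) _ _ (in1_full _) (in1_full _)).
Qed.

Lemma abP0 : abundant_in mLR (image phi).
Proof.
  intros a [u ->]. split.
  - destruct (s0_plus u) as [w [Iw Rw]]. exists (phi w). split; [exists w; reflexivity|].
    split; [apply idem_bb; rewrite bb_phi; exact Iw|]. apply Rstar_In; [apply assocLR|]. apply phi_Rstar; exact Rw.
  - destruct (s0_star u) as [w [Iw Rw]]. exists (phi w). split; [exists w; reflexivity|].
    split; [apply idem_bb; rewrite bb_phi; exact Iw|]. apply Lstar_In; [apply assocLR|]. apply phi_Lstar; exact Rw.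
Qed.

Lemma bar_LR_ex p : is_bar mLR (image phi) p (phi (bb p)).
Proof.
  destruct (decL_e (pl p)) as [e [w [Iw [Rw [Ie [G [Ex [Re Be]]]]]]]].
  destruct (decR_f (pr p)) as [h [w' [Iw' [Lw [Ih [Gh [Ea [Lh Bh]]]]]]]].
  rewrite <- bb_r in Lw, Ea. fold (bb p) in Rw, Ex.
  assert (Eok : barL (fst (e, iR w)) = barR (snd (e, iR w))) by (simpl; rewrite Be, bR0; reflexivity).
  set (E := exist (fun p0 : L * R => barL (fst p0) = barR (snd p0)) (e, iR w) Eok).
  assert (bE : bb E = w) by exact Be.
  assert (eW : mulL e (iL w) = e) by (apply (GreenL_idem aL Ie); auto; apply (tr_idem injL morL); auto).
  assert (Fok : barL (fst (iL w', h)) = barR (snd (iL w', h))) by (simpl; rewrite Bh, bL0; reflexivity).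
  set (F := exist (fun p0 : L * R => barL (fst p0) = barR (snd p0)) (iL w', h) Fok).
  assert (bF : bb F = w') by (unfold bb, pl; simpl; apply bL0).
  assert (wH : mulR (iR w') h = h) by (apply (GreenR_idem aR Ih); auto; apply (tr_idem injR morR); auto).
  assert (ws : mul0 w (bb p) = bb p) by (apply (RstarIn_idem a0 (Q:=@full S0)); auto; exact I).
  assert (sw : mul0 (bb p) w' = bb p) by (apply (LstarIn_idem a0 (Q:=@full S0)); auto; exact I).
  split; [exists (bb p); reflexivity|].
  exists E, F. split; [apply idem_bb; rewrite bE; exact Iw|].
  split; [apply idem_bb; rewrite bF; exact Iw'|].
  split.
  { apply LR_eq.
    - rewrite !mLR_pl, bF, bb_phi. unfold pl at 2; simpl. rewrite <- aL, <- morL, sw. exact Ex.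
    - rewrite !mLR_pr, bb_mul, bE, bb_phi, ws. unfold pr at 2; simpl. exact Ea. }
  split.
  { exists (phi w). split.
    - split; [exists w; reflexivity|]. split; [apply idem_bb; rewrite bb_phi; exact Iw|].
      apply Rstar_In; [apply assocLR|]. apply phi_Rstar; exact Rw.
    - exists (Some E), (Some (phi w)). simpl. split.
      + apply LR_eq.
        * rewrite mLR_pl, bb_phi. unfold pl; simpl. symmetry; exact eW.
        * rewrite mLR_pr, bE. unfold pr; simpl. rewrite <- morR, Iw. reflexivity.
      + apply LR_eq.
        * rewrite mLR_pl, bE. unfold pl; simpl. rewrite <- morL, Iw. reflexivity.
        * rewrite mLR_pr, bb_phi. unfold pr; simpl. rewrite <- morR, Iw. reflexivity. }
  { exists (phi w'). split.
    - split; [exists w'; reflexivity|]. split; [apply idem_bb; rewrite bb_phi; exact Iw'|].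
      apply Lstar_In; [apply assocLR|]. apply phi_Lstar; exact Lw.
    - exists (Some F), (Some (phi w')). simpl. split.
      + apply LR_eq.
        * rewrite mLR_pl, bF. unfold pl; simpl. rewrite <- morL, Iw'. reflexivity.
        * rewrite mLR_pr, bb_phi. unfold pr; simpl. symmetry; exact wH.
      + apply LR_eq.
        * rewrite mLR_pl, bb_phi. unfold pl; simpl. rewrite <- morL, Iw'. reflexivity.
        * rewrite mLR_pr, bF. unfold pr; simpl. rewrite <- morR, Iw'. reflexivity. }
Qed.

Lemma GreenL_bb a b : GreenL mLR a b -> GreenL mul0 (bb a) (bb b).
Proof.
  intros [X [Y [H1 H2]]]. exists (option_map bb X), (option_map bb Y). split.
  - rewrite H1 at 1. apply bb_lmul1.
  - rewrite H2 at 1. apply bb_lmul1.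
Qed.
Lemma GreenR_bb a b : GreenR mLR a b -> GreenR mul0 (bb a) (bb b).
Proof.
  intros [X [Y [H1 H2]]]. exists (option_map bb X), (option_map bb Y). split.
  - rewrite H1 at 1. apply bb_rmul1.
  - rewrite H2 at 1. apply bb_rmul1.
Qed.

Lemma bar_LR_unique p s' : is_bar mLR (image phi) p s' -> s' = phi (bb p).
Proof.
  intros [[v ->] [E' [F' [IE [IF [Ep [[P' [[[v' ->] [Iv' Rv']] GE]] [Q' [[[v'' ->] [Iv'' Lv'']] GF]]]]]]]]].
  apply (tr_Rstar phi_inj phi_mor) in Rv'. apply (tr_Lstar phi_inj phi_mor) in Lv''.
  apply idem_bb in IE, IF, Iv', Iv''. rewrite bb_phi in Iv', Iv''.
  apply GreenL_bb in GE. apply GreenR_bb in GF. rewrite bb_phi in GE, GF.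
  destruct (GreenL_idem a0 IE Iv' GE) as [A1 A2].
  destruct (GreenR_idem a0 IF Iv'' GF) as [B1 B2].
  assert (C1 : bb E' = v') by (transitivity (mul0 (bb E') v'); [symmetry; exact A1|]; rewrite s0_comm; auto).
  assert (C2 : bb F' = v'') by (transitivity (mul0 v'' (bb F')); [symmetry; exact B1|]; rewrite s0_comm; auto).
  assert (D1 : mul0 v' v = v) by (apply (RstarIn_idem a0 (Q:=@full S0)); auto; exact I).
  assert (D2 : mul0 v v'' = v) by (apply (LstarIn_idem a0 (Q:=@full S0)); auto; exact I).
  f_equal. rewrite Ep, !bb_mul, C1, C2, bb_phi, D1, D2. reflexivity.
Qed.

Lemma part1 :
     LR_closed mulL mulR iL iR barL barR /\
     associative mLR /\
     quasi_adequate mLR /\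
     exists P0 : LRt -> Prop,
       adequate_transversal mLR P0 /\
       quasi_ideal mLR P0 /\
       admissible mLR P0 /\
       exists phi : S0 -> LRt,
         injective phi /\ morphism mul0 mLR phi /\
         (forall p, P0 p <-> image phi p).
Proof.
  split; [apply closed|]. split; [apply assocLR|]. split; [apply qa_LR|].
  exists (image phi). split.
  { split.
    - split.
      + intros a b [u ->] [v ->]. exists (mul0 u v). apply phi_mul.
      + split; [apply abP0|]. split.
        * intros a b [u ->] [v ->]. split.
          -- intros H. apply phi_Lstar. apply (tr_Lstar phi_inj phi_mor); exact H.
          -- intros H. apply Lstar_In; [apply assocLR|exact H].
        * intros a b [u ->] [v ->]. split.
          -- intros H. apply phi_Rstar. apply (tr_Rstar phi_inj phi_mor); exact H.
          -- intros H. apply Rstar_In; [apply assocLR|exact H].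
    - split.
      + split; [apply abP0|]. intros e f [u ->] [v ->] Ie If.
        apply idem_bb in Ie, If. rewrite bb_phi in Ie, If.
        rewrite !phi_mul, (s0_comm Ie If). reflexivity.
      + intros p. exists (phi (bb p)). split; [apply bar_LR_ex|].
        intros s' H. symmetry; apply bar_LR_unique; exact H. }
  split.
  { intros a x b [u ->] [v ->]. exists (mul0 (mul0 u (bb x)) v). apply LR_eq.
    - rewrite !mLR_pl, bb_phi. unfold pl; simpl. rewrite !morL. reflexivity.
    - rewrite !mLR_pr, bb_mul, bb_phi. unfold pr; simpl. rewrite !morR. reflexivity. }
  split.
  { intros x y s t Hs Ht. rewrite (bar_LR_unique Hs), (bar_LR_unique Ht), phi_mul, <- bb_mul.
    apply bar_LR_ex. }
  exists phi. split; [apply phi_inj|]. split; [apply phi_mor|]. intros p; tauto.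
Qed.

End Part1.
Set Default Proof Using "All".
Set Implicit Arguments.
Unset Strict Implicit.

Section Part2.
Variables (T : Type) (mul : T -> T -> T) (P : T -> Prop).
Hypotheses (assoc : associative mul) (qa : quasi_adequate mul)
  (HT : adequate_transversal mul P) (HQ : quasi_ideal mul P) (adm : admissible mul P).

Definition bar (x : T) : T := proj1_sig (constructive_indefinite_description _ (bar_ex assoc HT HQ x)).
Lemma bar_spec x : is_bar mul P x (bar x).
Proof. unfold bar. destruct (constructive_indefinite_description _ _) as [s H]. exact H. Qed.
Lemma bar_P x : P (bar x).
Proof. exact (proj1 (bar_spec x)). Qed.

Lemma plus_ex s : exists p, P s -> is_plus mul P s p.
Proof.
  destruct (classic (P s)) as [H|H].
  - destruct (P_plus assoc HT HQ H) as [p Hp]. exists p; auto.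
  - exists s. intros H'; contradiction.
Qed.
Lemma star_ex s : exists p, P s -> is_star mul P s p.
Proof.
  destruct (classic (P s)) as [H|H].
  - destruct (P_star assoc HT HQ H) as [p Hp]. exists p; auto.
  - exists s. intros H'; contradiction.
Qed.
Definition plusf s := proj1_sig (constructive_indefinite_description _ (plus_ex s)).
Definition starf s := proj1_sig (constructive_indefinite_description _ (star_ex s)).
Lemma plus_spec s : P s -> is_plus mul P s (plusf s).
Proof. unfold plusf. destruct (constructive_indefinite_description _ _) as [p H]. exact H. Qed.
Lemma star_spec s : P s -> is_star mul P s (starf s).
Proof. unfold starf. destruct (constructive_indefinite_description _ _) as [p H]. exact H. Qed.

Lemma bar_mul x y : bar (mul x y) = mul (bar x) (bar y).
Proof. apply (bar_unique assoc HT HQ (bar_spec _)). apply adm; apply bar_spec. Qed.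
Lemma bar_id s : P s -> bar s = s.
Proof. intros H. apply (bar_unique assoc HT HQ (bar_spec _)). apply (bar_self assoc HT HQ H). Qed.

Lemma dec_x x : exists e f, dec mul P x e (bar x) f (plusf (bar x)) (starf (bar x)).
Proof.
  destruct (proj1 (is_bar_dec assoc HT HQ _ _) (bar_spec x)) as [e [f [p [q D]]]].
  pose proof D as [_ [_ [_ [_ [Hp [_ [Hq _]]]]]]].
  rewrite (plus_unique assoc HT HQ Hp (plus_spec (bar_P x))) in D.
  rewrite (star_unique assoc HT HQ Hq (star_spec (bar_P x))) in D.
  exists e, f. exact D.
Qed.

Lemma KL y v : P v -> exists e, idempotent mul e /\ GreenL mul e (plusf (bar (mul y v))) /\
  mul y v = mul e (bar (mul y v)).
Proof.
  intros Pv. destruct (dec_x y) as [e [f D1]].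
  destruct (bar_self_dec assoc HT HQ Pv) as [p2 [q2 D2]].
  pose proof (dec_facts assoc HT HQ D2) as [_ [_ [_ [_ [_ [F6 _]]]]]].
  destruct (prod_dec assoc HT HQ D1 D2) as [_ [p' [q' D3]]].
  assert (Eu : mul (mul (bar y) (mul f p2)) v = bar (mul y v)).
  { apply (bar_unique assoc HT HQ (x:=mul y v)); [|apply bar_spec].
    apply (is_bar_dec assoc HT HQ). exists (mul e p'), (mul q' q2), p', q'. exact D3. }
  rewrite Eu in D3.
  pose proof D3 as [Pu [Ie [_ [Ex [Hp' [G [Hq' _]]]]]]].
  rewrite (plus_unique assoc HT HQ Hp' (plus_spec Pu)) in G, Ie, Ex.
  exists (mul e (plusf (bar (mul y v)))). split; [exact Ie|]. split; [exact G|].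
  assert (Uq : mul (bar (mul y v)) q2 = bar (mul y v))
    by (rewrite <- Eu; rewrite <- (assoc _ v q2), F6; reflexivity).
  rewrite Ex at 1. rewrite (assoc _ q' q2), <- (assoc _ (bar (mul y v)) q'), (star_mul assoc HT HQ Hq').
  rewrite <- (assoc _ (bar (mul y v)) q2), Uq. reflexivity.
Qed.

Lemma KR v y : P v -> exists h, idempotent mul h /\ GreenR mul h (starf (bar (mul v y))) /\
  mul v y = mul (bar (mul v y)) h.
Proof.
  intros Pv. destruct (dec_x y) as [e [f D1]].
  destruct (bar_self_dec assoc HT HQ Pv) as [p2 [q2 D2]].
  pose proof (dec_facts assoc HT HQ D2) as [_ [_ [_ [_ [F5 _]]]]].
  destruct (prod_dec assoc HT HQ D2 D1) as [_ [p' [q' D3]]].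
  assert (Eu : mul (mul v (mul q2 e)) (bar y) = bar (mul v y)).
  { apply (bar_unique assoc HT HQ (x:=mul v y)); [|apply bar_spec].
    apply (is_bar_dec assoc HT HQ). exists (mul p2 p'), (mul q' f), p', q'. exact D3. }
  rewrite Eu in D3.
  pose proof D3 as [Pu [_ [Ih [Ex [Hp' [_ [Hq' G]]]]]]].
  rewrite (star_unique assoc HT HQ Hq' (star_spec Pu)) in G, Ih, Ex.
  exists (mul (starf (bar (mul v y))) f). split; [exact Ih|]. split; [exact G|].
  assert (Uq : mul p2 (bar (mul v y)) = bar (mul v y))
    by (rewrite <- Eu; rewrite !assoc, F5; reflexivity).
  rewrite Ex at 1. rewrite <- (assoc p2 p'), (plus_mul assoc HT HQ Hp'), Uq. reflexivity.
Qed.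


Lemma plus_idem s : P s -> idempotent mul s -> plusf s = s.
Proof.
  intros Ps Is. symmetry. apply (plus_unique assoc HT HQ (s:=s)); [|apply plus_spec; auto].
  split; [auto|split; [auto|apply RstarIn_refl; auto]].
Qed.
Lemma star_idem s : P s -> idempotent mul s -> starf s = s.
Proof.
  intros Ps Is. symmetry. apply (star_unique assoc HT HQ (s:=s)); [|apply star_spec; auto].
  split; [auto|split; [auto|apply LstarIn_refl; auto]].
Qed.

Definition QL x := exists y v, P v /\ x = mul y v.
Definition QR x := exists v y, P v /\ x = mul v y.

Lemma idem_L x : idempotent mul x -> QL x -> GreenL mul x (bar x) /\ idempotent mul (bar x).
Proof.
  intros Ix [y [v [Pv Ex0]]]. destruct (KL y Pv) as [e [Ie [G Ex]]].
  rewrite <- Ex0 in G, Ex.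
  assert (Is : idempotent mul (bar x)).
  { unfold idempotent. rewrite <- bar_mul, Ix. reflexivity. }
  rewrite plus_idem in G; [|apply bar_P|exact Is].
  destruct (GreenL_idem assoc Ie Is G) as [E1 _].
  rewrite E1 in Ex. split; [|exact Is]. rewrite Ex at 1. exact G.
Qed.
Lemma idem_R x : idempotent mul x -> QR x -> GreenR mul x (bar x) /\ idempotent mul (bar x).
Proof.
  intros Ix [v [y [Pv Ex0]]]. destruct (KR y Pv) as [h [Ih [G Ex]]].
  rewrite <- Ex0 in G, Ex.
  assert (Is : idempotent mul (bar x)).
  { unfold idempotent. rewrite <- bar_mul, Ix. reflexivity. }
  rewrite star_idem in G; [|apply bar_P|exact Is].
  destruct (GreenR_idem assoc Ih Is G) as [E1 _].
  rewrite E1 in Ex. split; [|exact Is]. rewrite Ex at 1. exact G.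
Qed.

Lemma QLmul a b : QL a -> QL b -> QL (mul a b).
Proof. intros _ [y [v [Pv ->]]]. exists (mul a y), v. split; auto. Qed.
Lemma QRmul a b : QR a -> QR b -> QR (mul a b).
Proof. intros [v [y [Pv ->]]] _. exists v, (mul y b). split; auto. Qed.
Lemma Pmul a b : P a -> P b -> P (mul a b).
Proof. apply (P_mul assoc HT HQ). Qed.
Lemma P_QL s : P s -> QL s.
Proof. intros H. exists (plusf s), s. split; auto. symmetry; apply (plus_mul assoc HT HQ (plus_spec H)). Qed.
Lemma P_QR s : P s -> QR s.
Proof. intros H. exists s, (starf s). split; auto. symmetry; apply (star_mul assoc HT HQ (star_spec H)). Qed.

Definition Lt := sig QL.
Definition Rt := sig QR.
Definition S0t := sig P.
Definition mulL : Lt -> Lt -> Lt := mulQ QLmul.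
Definition mulR : Rt -> Rt -> Rt := mulQ QRmul.
Definition mul0 : S0t -> S0t -> S0t := mulQ Pmul.
Definition iL (s : S0t) : Lt := exist QL (proj1_sig s) (P_QL (proj2_sig s)).
Definition iR (s : S0t) : Rt := exist QR (proj1_sig s) (P_QR (proj2_sig s)).
Definition barL (l : Lt) : S0t := exist P (bar (proj1_sig l)) (bar_P _).
Definition barR (r : Rt) : S0t := exist P (bar (proj1_sig r)) (bar_P _).

Lemma aL : associative mulL. Proof. apply assoc_sub; auto. Qed.
Lemma aR : associative mulR. Proof. apply assoc_sub; auto. Qed.
Lemma a0 : associative mul0. Proof. apply assoc_sub; auto. Qed.

Lemma eqL (a b : Lt) : proj1_sig a = proj1_sig b -> a = b.
Proof. apply (sig_eq assoc QLmul). Qed.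
Lemma eqR (a b : Rt) : proj1_sig a = proj1_sig b -> a = b.
Proof. apply (sig_eq assoc QRmul). Qed.
Lemma eq0 (a b : S0t) : proj1_sig a = proj1_sig b -> a = b.
Proof. apply (sig_eq assoc Pmul). Qed.

Lemma imL_iff l : image iL l <-> P (proj1_sig l).
Proof.
  split.
  - intros [s ->]. exact (proj2_sig s).
  - intros H. exists (exist P _ H). apply eqL. reflexivity.
Qed.
Lemma imR_iff l : image iR l <-> P (proj1_sig l).
Proof.
  split.
  - intros [s ->]. exact (proj2_sig s).
  - intros H. exists (exist P _ H). apply eqR. reflexivity.
Qed.

Lemma RL_iff a b : RstarIn mulL (image iL) a b <-> RstarIn mul P (proj1_sig a) (proj1_sig b).
Proof.
  rewrite <- (RstarIn_sub assoc QLmul P_QL). split; apply (RstarIn_ext aL); intros z; rewrite imL_iff; tauto.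
Qed.
Lemma LL_iff a b : LstarIn mulL (image iL) a b <-> LstarIn mul P (proj1_sig a) (proj1_sig b).
Proof.
  rewrite <- (LstarIn_sub assoc QLmul P_QL). split; apply (LstarIn_ext aL); intros z; rewrite imL_iff; tauto.
Qed.
Lemma RR_iff a b : RstarIn mulR (image iR) a b <-> RstarIn mul P (proj1_sig a) (proj1_sig b).
Proof.
  rewrite <- (RstarIn_sub assoc QRmul P_QR). split; apply (RstarIn_ext aR); intros z; rewrite imR_iff; tauto.
Qed.
Lemma LR_iff a b : LstarIn mulR (image iR) a b <-> LstarIn mul P (proj1_sig a) (proj1_sig b).
Proof.
  rewrite <- (LstarIn_sub assoc QRmul P_QR). split; apply (LstarIn_ext aR); intros z; rewrite imR_iff; tauto.
Qed.


Lemma KL' x : QL x -> exists e, idempotent mul e /\ GreenL mul e (plusf (bar x)) /\ x = mul e (bar x).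
Proof. intros [y [v [Pv ->]]]. apply KL; exact Pv. Qed.
Lemma KR' x : QR x -> exists h, idempotent mul h /\ GreenR mul h (starf (bar x)) /\ x = mul (bar x) h.
Proof. intros [v [y [Pv ->]]]. apply KR; exact Pv. Qed.

Lemma decL' x : QL x -> exists e, dec mul P x e (bar x) (starf (bar x)) (plusf (bar x)) (starf (bar x)).
Proof.
  intros Hx. destruct (KL' Hx) as [e [Ie [G Ex]]]. exists e.
  pose proof (plus_spec (bar_P x)) as Hp. pose proof (star_spec (bar_P x)) as Hq.
  pose proof Hq as [Pq [Iq _]].
  split; [apply bar_P|]. split; [exact Ie|]. split; [exact Iq|]. split.
  { rewrite Ex at 1. rewrite <- assoc, (star_mul assoc HT HQ Hq). reflexivity. }
  split; [exact Hp|]. split; [exact G|]. split; [exact Hq|]. exists None, None; simpl; auto.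
Qed.
Lemma decR' x : QR x -> exists h, dec mul P x (plusf (bar x)) (bar x) h (plusf (bar x)) (starf (bar x)).
Proof.
  intros Hx. destruct (KR' Hx) as [h [Ih [G Ex]]]. exists h.
  pose proof (plus_spec (bar_P x)) as Hp. pose proof (star_spec (bar_P x)) as Hq.
  pose proof Hp as [Pp [Ip _]].
  split; [apply bar_P|]. split; [exact Ip|]. split; [exact Ih|]. split.
  { rewrite Ex at 1. rewrite (plus_mul assoc HT HQ Hp). reflexivity. }
  split; [exact Hp|]. split; [exists None, None; simpl; auto|]. split; [exact Hq|]. exact G.
Qed.

Lemma laL : left_adequate mulL.
Proof.
  split.
  - intros [x Hx] _. destruct (decL' Hx) as [e D].
    pose proof D as [_ [Ie [Iq [_ [Hp [G [Hq _]]]]]]].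
    pose proof (dec_facts assoc HT HQ D) as [F1 _].
    assert (Qe : QL e) by (exists e, (plusf (bar x)); split; [exact (proj1 Hp)| symmetry; exact F1]).
    split.
    + exists (exist QL e Qe). split; [exact I|]. split; [apply (idem_sub assoc QLmul); exact Ie|].
      apply (Rstar_sub assoc QLmul). exact (dec_Rstar assoc HT HQ D).
    + exists (exist QL _ (P_QL (proj1 Hq))). split; [exact I|].
      split; [apply (idem_sub assoc QLmul); exact Iq|].
      apply (Lstar_sub assoc QLmul). exact (dec_Lstar assoc HT HQ D).
  - intros a e f Ie If Ra Rf.
    pose proof (RstarIn_trans aL (RstarIn_sym aL Ra) Rf) as Ref.
    pose proof (proj1 (Ref (Some e) None I I) Ie) as E1.
    pose proof (proj2 (Ref (Some f) None I I) If) as E2.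
    apply (f_equal (@proj1_sig _ _)) in E1, E2. simpl in E1, E2.
    apply (idem_sub assoc QLmul) in Ie, If.
    apply eqL. destruct e as [x Hx], f as [z Hz]. simpl in *.
    destruct (idem_L Ie Hx) as [Gx Ix]. destruct (idem_L If Hz) as [Gz Iz].
    assert (B1 : mul (bar x) (bar z) = bar z) by (rewrite <- bar_mul, E1; reflexivity).
    assert (B2 : mul (bar z) (bar x) = bar x) by (rewrite <- bar_mul, E2; reflexivity).
    assert (S : bar x = bar z).
    { transitivity (mul (bar z) (bar x)); [symmetry; exact B2|].
      rewrite (P_comm assoc HT HQ (bar_P z) (bar_P x) Iz Ix). exact B1. }
    destruct (GreenL_idem assoc Ie Ix Gx) as [C1 _]. destruct (GreenL_idem assoc If Iz Gz) as [_ C2].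
    rewrite <- E1. rewrite <- C1 at 2. rewrite <- assoc, S, C2, <- S, C1. reflexivity.
Qed.

Lemma abL : abundant_in mulL (image iL).
Proof.
  intros a Ha. apply imL_iff in Ha. split.
  - destruct (P_plus assoc HT HQ Ha) as [p [Pp [Ip Rp]]]. exists (exist QL p (P_QL Pp)).
    split; [apply imL_iff; exact Pp|]. split; [apply (idem_sub assoc QLmul); exact Ip|]. apply RL_iff. exact Rp.
  - destruct (P_star assoc HT HQ Ha) as [p [Pp [Ip Rp]]]. exists (exist QL p (P_QL Pp)).
    split; [apply imL_iff; exact Pp|]. split; [apply (idem_sub assoc QLmul); exact Ip|]. apply LL_iff. exact Rp.
Qed.

Lemma barL_tr x s : is_bar mulL (image iL) x s -> is_bar mul P (proj1_sig x) (proj1_sig s).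
Proof.
  intros [Ps [e [f [Ie [If [E [[p [[Pp [Ip Rp]] G1]] [q [[Pq [Iq Lq]] G2]]]]]]]]].
  split; [apply imL_iff; exact Ps|]. exists (proj1_sig e), (proj1_sig f).
  split; [apply (idem_sub assoc QLmul); exact Ie|]. split; [apply (idem_sub assoc QLmul); exact If|].
  split; [apply (f_equal (@proj1_sig _ _)) in E; exact E|]. split.
  - exists (proj1_sig p). split.
    + split; [apply imL_iff; exact Pp|]. split; [apply (idem_sub assoc QLmul); exact Ip|]. apply RL_iff; exact Rp.
    + exact (GreenL_sub assoc (Qmul:=QLmul) P_QL G1).
  - exists (proj1_sig q). split.
    + split; [apply imL_iff; exact Pq|]. split; [apply (idem_sub assoc QLmul); exact Iq|]. apply LL_iff; exact Lq.
    + exact (GreenR_sub assoc (Qmul:=QLmul) P_QL G2).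
Qed.

Lemma barL_spec x : is_bar mulL (image iL) x (iL (barL x)).
Proof.
  destruct x as [x Hx]. destruct (decL' Hx) as [e D].
  pose proof D as [_ [Ie [Iq [Ex [Hp [G [Hq _]]]]]]].
  pose proof Hp as [Pp [Ip Rp]]. pose proof Hq as [Pq [_ Lq]].
  pose proof (dec_facts assoc HT HQ D) as [F1 [F2 _]].
  assert (Qe : QL e) by (exists e, (plusf (bar x)); split; [exact Pp| symmetry; exact F1]).
  set (E := exist QL e Qe). set (Pl := iL (exist P _ Pp)). set (Qs := iL (exist P _ Pq)).
  split; [exists (barL (exist QL x Hx)); reflexivity|].
  exists E, Qs. split; [apply (idem_sub assoc QLmul); exact Ie|]. split; [apply (idem_sub assoc QLmul); exact Iq|].
  split; [apply eqL; simpl; exact Ex|]. split.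
  - exists Pl. split.
    + split; [apply imL_iff; exact Pp|]. split; [apply (idem_sub assoc QLmul); exact Ip|]. apply RL_iff; exact Rp.
    + exists (Some E), (Some Pl). simpl. split; apply eqL; simpl; symmetry; assumption.
  - exists Qs. split.
    + split; [apply imL_iff; exact Pq|]. split; [apply (idem_sub assoc QLmul); exact Iq|]. apply LL_iff; exact Lq.
    + exists None, None. simpl. auto.
Qed.

Lemma atL : adequate_transversal mulL (image iL).
Proof.
  split; [|split].
  - split; [|split; [apply abL|split]].
    + intros a b Ha Hb. apply imL_iff. apply imL_iff in Ha, Hb. simpl. apply Pmul; auto.
    + intros a b Ha Hb. apply imL_iff in Ha, Hb. split.
      * intros H. apply (Lstar_sub assoc QLmul). apply (P_Lstar assoc HT HQ Ha Hb). apply LL_iff; exact H.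
      * intros H. apply (Lstar_In aL); exact H.
    + intros a b Ha Hb. apply imL_iff in Ha, Hb. split.
      * intros H. apply (Rstar_sub assoc QLmul). apply (P_Rstar assoc HT HQ Ha Hb). apply RL_iff; exact H.
      * intros H. apply (Rstar_In aL); exact H.
  - split; [apply abL|]. intros e f He Hf Ie If. apply eqL; simpl.
    apply imL_iff in He, Hf. apply (idem_sub assoc QLmul) in Ie, If.
    apply (P_comm assoc HT HQ); auto.
  - intros x. exists (iL (barL x)). split; [apply barL_spec|]. intros s' H. apply eqL. simpl.
    apply (bar_unique assoc HT HQ (bar_spec _)). apply barL_tr. exact H.
Qed.

Lemma qiL : quasi_ideal mulL (image iL).
Proof. intros a x b Ha Hb. apply imL_iff. apply imL_iff in Ha, Hb. simpl. apply HQ; auto. Qed.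
Lemma injL : injective iL.
Proof. intros a b H. apply eq0. apply (f_equal (@proj1_sig _ _)) in H. exact H. Qed.
Lemma morL : morphism mul0 mulL iL.
Proof. intros a b. apply eqL. reflexivity. Qed.


Lemma raR : right_adequate mulR.
Proof.
  split.
  - intros [x Hx] _. destruct (decR' Hx) as [h D].
    pose proof D as [_ [Ip [Ih [_ [Hp [_ [Hq G]]]]]]].
    pose proof (dec_facts assoc HT HQ D) as [_ [_ [F3 _]]].
    assert (Qh : QR h) by (exists (starf (bar x)), h; split; [exact (proj1 Hq)| symmetry; exact F3]).
    split.
    + exists (exist QR _ (P_QR (proj1 Hp))). split; [exact I|].
      split; [apply (idem_sub assoc QRmul); exact Ip|].
      apply (Rstar_sub assoc QRmul). exact (dec_Rstar assoc HT HQ D).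
    + exists (exist QR h Qh). split; [exact I|]. split; [apply (idem_sub assoc QRmul); exact Ih|].
      apply (Lstar_sub assoc QRmul). exact (dec_Lstar assoc HT HQ D).
  - intros a e f Ie If Ra Rf.
    pose proof (LstarIn_trans aR (LstarIn_sym aR Ra) Rf) as Ref.
    pose proof (proj1 (Ref (Some e) None I I) Ie) as E1.
    pose proof (proj2 (Ref (Some f) None I I) If) as E2.
    apply (f_equal (@proj1_sig _ _)) in E1, E2. simpl in E1, E2.
    apply (idem_sub assoc QRmul) in Ie, If.
    apply eqR. destruct e as [x Hx], f as [z Hz]. simpl in *.
    destruct (idem_R Ie Hx) as [Gx Ix]. destruct (idem_R If Hz) as [Gz Iz].
    assert (B1 : mul (bar z) (bar x) = bar z) by (rewrite <- bar_mul, E1; reflexivity).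
    assert (B2 : mul (bar x) (bar z) = bar x) by (rewrite <- bar_mul, E2; reflexivity).
    assert (S : bar x = bar z).
    { transitivity (mul (bar x) (bar z)); [symmetry; exact B2|].
      rewrite (P_comm assoc HT HQ (bar_P x) (bar_P z) Ix Iz). exact B1. }
    destruct (GreenR_idem assoc Ie Ix Gx) as [C1 _]. destruct (GreenR_idem assoc If Iz Gz) as [_ C2].
    transitivity (mul z x); [|exact E1].
    rewrite <- C1 at 2. rewrite assoc, S, C2, <- S, C1. reflexivity.
Qed.

Lemma abR : abundant_in mulR (image iR).
Proof.
  intros a Ha. apply imR_iff in Ha. split.
  - destruct (P_plus assoc HT HQ Ha) as [p [Pp [Ip Rp]]]. exists (exist QR p (P_QR Pp)).
    split; [apply imR_iff; exact Pp|]. split; [apply (idem_sub assoc QRmul); exact Ip|]. apply RR_iff. exact Rp.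
  - destruct (P_star assoc HT HQ Ha) as [p [Pp [Ip Rp]]]. exists (exist QR p (P_QR Pp)).
    split; [apply imR_iff; exact Pp|]. split; [apply (idem_sub assoc QRmul); exact Ip|]. apply LR_iff. exact Rp.
Qed.

Lemma barR_tr x s : is_bar mulR (image iR) x s -> is_bar mul P (proj1_sig x) (proj1_sig s).
Proof.
  intros [Ps [e [f [Ie [If [E [[p [[Pp [Ip Rp]] G1]] [q [[Pq [Iq Lq]] G2]]]]]]]]].
  split; [apply imR_iff; exact Ps|]. exists (proj1_sig e), (proj1_sig f).
  split; [apply (idem_sub assoc QRmul); exact Ie|]. split; [apply (idem_sub assoc QRmul); exact If|].
  split; [apply (f_equal (@proj1_sig _ _)) in E; exact E|]. split.
  - exists (proj1_sig p). split.
    + split; [apply imR_iff; exact Pp|]. split; [apply (idem_sub assoc QRmul); exact Ip|]. apply RR_iff; exact Rp.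
    + exact (GreenL_sub assoc (Qmul:=QRmul) P_QR G1).
  - exists (proj1_sig q). split.
    + split; [apply imR_iff; exact Pq|]. split; [apply (idem_sub assoc QRmul); exact Iq|]. apply LR_iff; exact Lq.
    + exact (GreenR_sub assoc (Qmul:=QRmul) P_QR G2).
Qed.

Lemma barR_spec x : is_bar mulR (image iR) x (iR (barR x)).
Proof.
  destruct x as [x Hx]. destruct (decR' Hx) as [h D].
  pose proof D as [_ [Ip [Ih [Ex [Hp [_ [Hq G]]]]]]].
  pose proof Hp as [Pp [_ Rp]]. pose proof Hq as [Pq [Iq Lq]].
  pose proof (dec_facts assoc HT HQ D) as [_ [_ [F3 [F4 _]]]].
  assert (Qh : QR h) by (exists (starf (bar x)), h; split; [exact Pq| symmetry; exact F3]).
  set (H := exist QR h Qh). set (Pl := iR (exist P _ Pp)). set (Qs := iR (exist P _ Pq)).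
  split; [exists (barR (exist QR x Hx)); reflexivity|].
  exists Pl, H. split; [apply (idem_sub assoc QRmul); exact Ip|]. split; [apply (idem_sub assoc QRmul); exact Ih|].
  split; [apply eqR; simpl; exact Ex|]. split.
  - exists Pl. split.
    + split; [apply imR_iff; exact Pp|]. split; [apply (idem_sub assoc QRmul); exact Ip|]. apply RR_iff; exact Rp.
    + exists None, None. simpl. auto.
  - exists Qs. split.
    + split; [apply imR_iff; exact Pq|]. split; [apply (idem_sub assoc QRmul); exact Iq|]. apply LR_iff; exact Lq.
    + exists (Some H), (Some Qs). simpl. split; apply eqR; simpl; symmetry; assumption.
Qed.

Lemma atR : adequate_transversal mulR (image iR).
Proof.
  split; [|split].
  - split; [|split; [apply abR|split]].
    + intros a b Ha Hb. apply imR_iff. apply imR_iff in Ha, Hb. simpl. apply Pmul; auto.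
    + intros a b Ha Hb. apply imR_iff in Ha, Hb. split.
      * intros H. apply (Lstar_sub assoc QRmul). apply (P_Lstar assoc HT HQ Ha Hb). apply LR_iff; exact H.
      * intros H. apply (Lstar_In aR); exact H.
    + intros a b Ha Hb. apply imR_iff in Ha, Hb. split.
      * intros H. apply (Rstar_sub assoc QRmul). apply (P_Rstar assoc HT HQ Ha Hb). apply RR_iff; exact H.
      * intros H. apply (Rstar_In aR); exact H.
  - split; [apply abR|]. intros e f He Hf Ie If. apply eqR; simpl.
    apply imR_iff in He, Hf. apply (idem_sub assoc QRmul) in Ie, If.
    apply (P_comm assoc HT HQ); auto.
  - intros x. exists (iR (barR x)). split; [apply barR_spec|]. intros s' H. apply eqR. simpl.
    apply (bar_unique assoc HT HQ (bar_spec _)). apply barR_tr. exact H.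
Qed.

Lemma qiR : quasi_ideal mulR (image iR).
Proof. intros a x b Ha Hb. apply imR_iff. apply imR_iff in Ha, Hb. simpl. apply HQ; auto. Qed.
Lemma injR : injective iR.
Proof. intros a b H. apply eq0. apply (f_equal (@proj1_sig _ _)) in H. exact H. Qed.
Lemma morR : morphism mul0 mulR iR.
Proof. intros a b. apply eqR. reflexivity. Qed.

Lemma setup : common_setup mulL mulR mul0 iL iR barL barR.
Proof.
  exact (conj aL (conj aR (conj a0 (conj laL (conj raR (conj injL (conj morL (conj injR (conj morR
    (conj atL (conj qiL (conj atR (conj qiR (conj barL_spec barR_spec)))))))))))))).
Qed.


Local Notation LRt := (LR barL barR).
Local Notation mLR := (mulLR mulL mulR iL iR barL barR).

Lemma mpl (p q : LRt) : pl (mLR p q) = mulL (pl p) (iL (bb q)).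
Proof. exact (mLR_pl aL aR a0 laL raR injL morL injR morR atL qiL atR qiR barL_spec barR_spec p q). Qed.
Lemma mpr (p q : LRt) : pr (mLR p q) = mulR (iR (bb p)) (pr q).
Proof. exact (mLR_pr aL aR a0 laL raR injL morL injR morR atL qiL atR qiR barL_spec barR_spec p q). Qed.
Lemma LReq (p q : LRt) : pl p = pl q -> pr p = pr q -> p = q.
Proof. exact (@LR_eq _ _ _ _ _ _ _ _ _ _ aL aR a0 laL raR injL morL injR morR atL qiL atR qiR barL_spec barR_spec p q). Qed.

Lemma aext a b c : mul a b = c -> forall z, mul a (mul b z) = mul c z.
Proof. intros H z. rewrite assoc, H. reflexivity. Qed.

Lemma Pplus s : P s -> P (plusf s). Proof. intros H; exact (proj1 (plus_spec H)). Qed.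
Lemma Pstar s : P s -> P (starf s). Proof. intros H; exact (proj1 (star_spec H)). Qed.

Lemma bar_xq x : bar (mul x (starf (bar x))) = bar x.
Proof. rewrite bar_mul, (bar_id (Pstar (bar_P x))). apply (star_mul assoc HT HQ (star_spec (bar_P x))). Qed.
Lemma bar_px x : bar (mul (plusf (bar x)) x) = bar x.
Proof. rewrite bar_mul, (bar_id (Pplus (bar_P x))). apply (plus_mul assoc HT HQ (plus_spec (bar_P x))). Qed.

Lemma Lx_ok x : QL (mul x (starf (bar x))).
Proof. exists x, (starf (bar x)). split; [apply Pstar, bar_P|reflexivity]. Qed.
Lemma Rx_ok x : QR (mul (plusf (bar x)) x).
Proof. exists (plusf (bar x)), x. split; [apply Pplus, bar_P|reflexivity]. Qed.
Definition lx x : Lt := exist QL _ (Lx_ok x).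
Definition rx x : Rt := exist QR _ (Rx_ok x).
Lemma psi_ok x : barL (fst (lx x, rx x)) = barR (snd (lx x, rx x)).
Proof. simpl. apply eq0. simpl. rewrite bar_xq, bar_px. reflexivity. Qed.
Definition psi x : LRt := exist _ (lx x, rx x) (psi_ok x).

Lemma dec_xq x e s f : dec mul P x e s f (plusf s) (starf s) ->
  mul x (starf s) = mul e s /\ mul (plusf s) x = mul s f.
Proof.
  intros D. pose proof (dec_facts assoc HT HQ D) as [F1 [F2 [F3 [F4 [F5 [F6 _]]]]]].
  pose proof D as [_ [_ [_ [Ex _]]]].
  split.
  - rewrite Ex at 1. rewrite <- assoc, F4, <- assoc, F6. reflexivity.
  - rewrite Ex at 1. rewrite !assoc, F2, F5. reflexivity.
Qed.

Lemma psi_inj : injective psi.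
Proof.
  intros x y H.
  assert (H1 : mul x (starf (bar x)) = mul y (starf (bar y))).
  { apply (f_equal (@pl _ _ _ barL barR)) in H. apply (f_equal (@proj1_sig _ _)) in H. exact H. }
  assert (H2 : mul (plusf (bar x)) x = mul (plusf (bar y)) y).
  { apply (f_equal (@pr _ _ _ barL barR)) in H. apply (f_equal (@proj1_sig _ _)) in H. exact H. }
  assert (Sb : bar x = bar y) by (rewrite <- bar_xq, H1, bar_xq; reflexivity).
  destruct (dec_x x) as [e [f D1]]. destruct (dec_x y) as [e' [f' D2]].
  rewrite <- Sb in D2, H1, H2.
  destruct (dec_xq D1) as [X1 X2]. destruct (dec_xq D2) as [Y1 Y2].
  pose proof (dec_facts assoc HT HQ D1) as [F1 [F2 [F3 [F4 _]]]].
  pose proof (dec_facts assoc HT HQ D2) as [F1' [F2' [F3' [F4' _]]]].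
  pose proof D1 as [Ps [_ [_ [Ex [[Pp [_ Rp]] [_ [[Pq [_ Lq]] _]]]]]]].
  pose proof D2 as [_ [_ [_ [Ey _]]]].
  assert (Ee : e = e').
  { rewrite X1, Y1 in H1. apply (Rstar_can assoc (P_Rstar assoc HT HQ Ps Pp Rp)) in H1.
    rewrite F1, F1' in H1. exact H1. }
  assert (Ef : f = f').
  { rewrite X2, Y2 in H2. apply (Lstar_can assoc (P_Lstar assoc HT HQ Ps Pq Lq)) in H2.
    rewrite F3, F3' in H2. exact H2. }
  rewrite Ex, Ey, Ee, Ef. reflexivity.
Qed.

Lemma psi_surj : surjective psi.
Proof.
  intros [[[x Hx] [y Hy]] H]. simpl in H.
  assert (Sb : bar x = bar y) by (apply (f_equal (@proj1_sig _ _)) in H; exact H).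
  destruct (decL' Hx) as [e D1]. destruct (decR' Hy) as [h D2].
  rewrite <- Sb in D2.
  pose proof D1 as [Ps [Ie [Iq [Ex [Hp [G1 [Hq _]]]]]]].
  pose proof D2 as [_ [_ [Ih [Ey [_ [_ [_ G2]]]]]]].
  pose proof (dec_facts assoc HT HQ D1) as [F1 [F2 [F3 [F4 [F5 [F6 _]]]]]].
  pose proof (dec_facts assoc HT HQ D2) as [_ [_ [F3' [F4' _]]]].
  set (w := mul (mul e (bar x)) h).
  assert (Dw : dec mul P w e (bar x) h (plusf (bar x)) (starf (bar x))).
  { split; [exact Ps|]. split; [exact Ie|]. split; [exact Ih|]. split; [reflexivity|].
    split; [exact Hp|]. split; [exact G1|]. split; [exact Hq|]. exact G2. }
  assert (Bw : bar w = bar x).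
  { symmetry. apply (bar_unique assoc HT HQ (x:=w)); [|apply bar_spec].
    apply (is_bar_dec assoc HT HQ). exists e, h, (plusf (bar x)), (starf (bar x)). exact Dw. }
  exists w. apply LReq.
  - unfold pl; simpl. apply eqL; simpl. rewrite Bw. unfold w.
    rewrite <- (assoc _ h), F4'. first [exact Ex | exact (eq_sym Ex)].
  - unfold pr; simpl. apply eqR; simpl. rewrite Bw. unfold w.
    rewrite !assoc, F2, F5. rewrite Ey at 1. rewrite F5. reflexivity.
Qed.


Lemma psi_mor : morphism mul mLR psi.
Proof.
  intros x y.
  destruct (dec_x x) as [e [f D1]]. destruct (dec_x y) as [g [h D2]].
  destruct (prod_dec assoc HT HQ D1 D2) as [_ [p' [q' D3]]].
  assert (Hu : mul (mul (bar x) (mul f g)) (bar y) = mul (bar x) (bar y)).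
  { rewrite <- bar_mul. apply (bar_unique assoc HT HQ (x:=mul x y)); [|apply bar_spec].
    apply (is_bar_dec assoc HT HQ). exists (mul e p'), (mul q' h), p', q'. exact D3. }
  destruct (dec_xq D1) as [X1 X2]. destruct (dec_xq D2) as [Y1 Y2].
  pose proof (dec_facts assoc HT HQ D1) as [F1 [F2 [F3 [F4 [F5 [F6 [Ip [Iq [Pp Pq]]]]]]]]].
  pose proof (dec_facts assoc HT HQ D2) as [F1' [F2' [F3' [F4' [F5' [F6' [Ip' [Iq' [Pp' Pq']]]]]]]]].
  pose proof D1 as [Ps [_ [_ [Ex _]]]]. pose proof D2 as [Pt [_ [_ [Ey _]]]].
  pose proof (Pmul Ps Pt) as Pst.
  pose proof (star_spec Pst) as Hqu. pose proof (plus_spec Pst) as Hpu.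
  pose proof Hqu as [Pqu [Iqu Lqu]]. pose proof Hpu as [Ppu [Ipu Rpu]].
  pose proof (star_mul assoc HT HQ Hqu) as uqu. pose proof (plus_mul assoc HT HQ Hpu) as puu.
  apply LReq.
  - rewrite mpl. unfold pl, bb; simpl. apply eqL; simpl.
    rewrite bar_xq, bar_mul, X1.
    remember (bar x) as s eqn:Es. remember (bar y) as t eqn:Et.
    remember (starf t) as qt. remember (plusf s) as ps.
    assert (uqt : mul (mul s t) qt = mul s t) by (rewrite <- assoc, F6'; reflexivity).
    assert (A : mul (starf (mul s t)) qt = starf (mul s t)) by (exact (proj1 (Lqu (Some qt) None Pq' I) uqt)).
    assert (B : mul qt (starf (mul s t)) = starf (mul s t)) by (rewrite (P_comm assoc HT HQ Pq' Pqu Iq' Iqu); exact A).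
    assert (hqu : mul h (starf (mul s t)) = starf (mul s t)) by (rewrite <- B, assoc, F4'; reflexivity).
    assert (Hu' : forall z, mul s (mul f (mul g (mul t z))) = mul s (mul t z)).
    { intros z. rewrite (assoc g t z), (assoc f (mul g t) z), (assoc s (mul f (mul g t)) z).
      rewrite (assoc f g t), (assoc s (mul f g) t), Hu, <- assoc. reflexivity. }
    assert (uqu' : mul s (mul t (starf (mul s t))) = mul s t) by (rewrite assoc; exact uqu).
    rewrite Ex, Ey. rewrite <- !assoc. rewrite hqu, Hu', uqu'. reflexivity.
  - rewrite mpr. unfold pr, bb, pl; simpl. apply eqR; simpl.
    rewrite bar_xq, bar_mul.
    remember (bar x) as s eqn:Es. remember (bar y) as t eqn:Et.
    remember (starf t) as qt. remember (plusf s) as ps. remember (plusf t) as pt.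
    assert (psu : mul ps (mul s t) = mul s t) by (rewrite assoc, F5; reflexivity).
    assert (A : mul ps (plusf (mul s t)) = plusf (mul s t)) by (exact (proj1 (Rpu (Some ps) None Pp I) psu)).
    assert (B : mul (plusf (mul s t)) ps = plusf (mul s t)) by (rewrite <- (P_comm assoc HT HQ Pp Ppu Ip Ipu); exact A).
    assert (pue : forall z, mul (plusf (mul s t)) (mul e z) = mul (plusf (mul s t)) z).
    { intros z. rewrite assoc, <- B at 1. rewrite <- (assoc _ ps e), F2, B. reflexivity. }
    assert (Hu' : forall z, mul s (mul f (mul g (mul t z))) = mul s (mul t z)).
    { intros z. rewrite (assoc g t z), (assoc f (mul g t) z), (assoc s (mul f (mul g t)) z).
      rewrite (assoc f g t), (assoc s (mul f g) t), Hu, <- assoc. reflexivity. }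
    assert (puu' : forall z, mul (plusf (mul s t)) (mul s (mul t z)) = mul s (mul t z)).
    { intros z. rewrite (assoc s t z), assoc, puu. reflexivity. }
    assert (ptg : forall z, mul pt (mul g z) = mul pt z) by (intros z; rewrite assoc, F2'; reflexivity).
    assert (ptt : forall z, mul pt (mul t z) = mul t z) by (intros z; rewrite assoc, F5'; reflexivity).
    rewrite Ex, Ey. rewrite <- !assoc. rewrite pue, Hu', puu', ptg, ptt. reflexivity.
Qed.

Lemma part2 : exists (L R S0 : Type) (mulL : L -> L -> L) (mulR : R -> R -> R)
       (mul0 : S0 -> S0 -> S0) (iL : S0 -> L) (iR : S0 -> R)
       (barL : L -> S0) (barR : R -> S0),
       common_setup mulL mulR mul0 iL iR barL barR /\
       exists psi : T -> LR barL barR,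
         injective psi /\ surjective psi /\
         morphism mul (mulLR mulL mulR iL iR barL barR) psi.
Proof.
  exists Lt, Rt, S0t, mulL, mulR, mul0, iL, iR, barL, barR. split; [apply setup|].
  exists psi. split; [apply psi_inj|]. split; [apply psi_surj|]. apply psi_mor.
Qed.

End Part2.

Theorem corollary2p18 :
  (forall (L R S0 : Type) (mulL : L -> L -> L) (mulR : R -> R -> R)
     (mul0 : S0 -> S0 -> S0) (iL : S0 -> L) (iR : S0 -> R)
     (barL : L -> S0) (barR : R -> S0),
     common_setup mulL mulR mul0 iL iR barL barR ->
     LR_closed mulL mulR iL iR barL barR /\
     associative (mulLR mulL mulR iL iR barL barR) /\
     quasi_adequate (mulLR mulL mulR iL iR barL barR) /\
     exists P0 : LR barL barR -> Prop,
       adequate_transversal (mulLR mulL mulR iL iR barL barR) P0 /\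
       quasi_ideal (mulLR mulL mulR iL iR barL barR) P0 /\
       admissible (mulLR mulL mulR iL iR barL barR) P0 /\
       exists phi : S0 -> LR barL barR,
         injective phi /\ morphism mul0 (mulLR mulL mulR iL iR barL barR) phi /\
         (forall p, P0 p <-> image phi p))
  /\
  (forall (S : Type) (mulS : S -> S -> S) (P0 : S -> Prop),
     associative mulS -> quasi_adequate mulS ->
     adequate_transversal mulS P0 -> quasi_ideal mulS P0 -> admissible mulS P0 ->
     exists (L R S0 : Type) (mulL : L -> L -> L) (mulR : R -> R -> R)
       (mul0 : S0 -> S0 -> S0) (iL : S0 -> L) (iR : S0 -> R)
       (barL : L -> S0) (barR : R -> S0),
       common_setup mulL mulR mul0 iL iR barL barR /\
       exists psi : S -> LR barL barR,
         injective psi /\ surjective psi /\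
         morphism mulS (mulLR mulL mulR iL iR barL barR) psi).
Proof.
  split.
  - intros L R S0 mulL mulR mul0 iL iR barL barR H.
    destruct H as [aL [aR [a0 [laL [raR [injL [morL [injR [morR [atL [qiL [atR [qiR [bL bR]]]]]]]]]]]]]].
    exact (part1 aL aR a0 laL raR injL morL injR morR atL qiL atR qiR bL bR).
  - intros S mulS P0 Ha Hqa Ht Hq Had. exact (part2 Ha Hqa Ht Hq Had).
Qed.
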